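(* Let $(a_j)_{j\in\mathbb{N}_0}$ be a complex sequence with $\sum_{j=0}^\infty|a_j|<\infty$, and let $(b_j)_{j\in\mathbb{N}_0}$ be a strictly increasing sequence of positive reals with $b_j\to\infty$, such that $$\liminf_{j\to\infty}\frac{b_{j+1}}{b_j}>1\quad\text{and}\quad a_jb_j\not\to0\ \text{ as } j\to\infty.$$ Let $f(t)=\sum_{j=0}^\infty a_je^{i b_jt}$, $t\in\mathbb{R}$. Then $f$ is bounded and continuous on $\mathbb{R}$ but differentiable at no point of $\mathbb{R}$. If in addition $\sup_j|a_j|b_j=\infty$, then $f$ is not Lipschitz continuous at any point of $\mathbb{R}$. The same conclusions hold for $\operatorname{Re}f$ and $\operatorname{Im}f$.
   Context: A function $g\colon\mathbb{R}\to\mathbb{C}$ is Lipschitz continuous at $t_0$ if there exist constants $L>0$, $\eta>0$ such that $|g(t)-g(t_0)|\le L|t-t_0|$ for all $t\in\,]t_0-\eta,t_0+\eta[$. *)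

(* Defs.v *)
(* real analysis with Stdlib Reals.
   Complex numbers are represented by pairs (real part, imaginary part) of reals;
   a complex-valued function g : R -> C is represented by two real functions. *)
From Stdlib Require Import Reals.
Open Scope R_scope.

Definition cmod (x y : R) : R := sqrt (x ^ 2 + y ^ 2).

(* real part of the j-th term a_j e^{i b_j t}, with a_j = ax j + i ay j *)
Definition term_re (ax ay b : nat -> R) (t : R) (j : nat) : R :=
  ax j * cos (b j * t) - ay j * sin (b j * t).
Definition term_im (ax ay b : nat -> R) (t : R) (j : nat) : R :=
  ax j * sin (b j * t) + ay j * cos (b j * t).

Definition lipschitz_at (g : R -> R) (t0 : R) : Prop :=
  exists L eta, 0 < L /\ 0 < eta /\
    forall t, Rabs (t - t0) < eta -> Rabs (g t - g t0) <= L * Rabs (t - t0).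

Definition clipschitz_at (gr gi : R -> R) (t0 : R) : Prop :=
  exists L eta, 0 < L /\ 0 < eta /\
    forall t, Rabs (t - t0) < eta ->
      cmod (gr t - gr t0) (gi t - gi t0) <= L * Rabs (t - t0).

Definition cdifferentiable_at (gr gi : R -> R) (t : R) : Prop :=
  exists lr li, derivable_pt_lim gr t lr /\ derivable_pt_lim gi t li.

(* Main.v *)
Require Import Defs.
From Coquelicot Require Import Coquelicot.
From Stdlib Require Import Reals Lra Lia Classical.
Open Scope R_scope.


Lemma RI_lin (f g : R -> R) a b If Ig c d : is_RInt f a b If -> is_RInt g a b Ig ->
  is_RInt (fun x => c * f x + d * g x) a b (c*If + d*Ig).
Proof.
  intros Hf Hg.
  apply (is_RInt_plus (fun x => c * f x) (fun x => d * g x)).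
  - apply (is_RInt_scal f a b c If Hf).
  - apply (is_RInt_scal g a b d Ig Hg).
Qed.

Lemma RI_deriv (F f : R -> R) a b : (forall x, is_derive F x (f x)) -> (forall x, continuous f x) ->
  is_RInt f a b (F b - F a).
Proof. intros H1 H2. exact (@is_RInt_derive R_CompleteNormedModule F f a b (fun x _ => H1 x) (fun x _ => H2 x)). Qed.

Lemma cont_cos_lin mu : forall x, continuous (fun s => cos (mu * s)) x.
Proof. intros x. apply (@ex_derive_continuous R_AbsRing R_NormedModule). auto_derive. auto. Qed.
Lemma cont_sin_lin mu : forall x, continuous (fun s => sin (mu * s)) x.
Proof. intros x. apply (@ex_derive_continuous R_AbsRing R_NormedModule). auto_derive. auto. Qed.

Lemma RI_ext (f g : R -> R) a b I : (forall x, f x = g x) -> is_RInt f a b I -> is_RInt g a b I.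
Proof. intros H. apply is_RInt_ext. intros; apply H. Qed.

Definition Ic (S mu : R) : R := if Req_EM_T mu 0 then 2 * S else 2 * sin (mu * S) / mu.

Lemma Ic_mul S mu : mu * Ic S mu = 2 * sin (mu * S).
Proof. unfold Ic. destruct (Req_EM_T mu 0) as [->|n].
  - rewrite !Rmult_0_l, sin_0. ring.
  - field. auto. Qed.

Lemma RI_cos S mu : is_RInt (fun s => cos (mu * s)) (-S) S (Ic S mu).
Proof.
  unfold Ic. destruct (Req_EM_T mu 0) as [->|n].
  - apply is_RInt_ext with (fun _ => 1).
    + intros; rewrite Rmult_0_l, cos_0; auto.
    + assert (H := @is_RInt_const R_CompleteNormedModule (-S) S 1).
      replace (2*S) with (scal (S - - S) 1). exact H. unfold scal; simpl; unfold mult; simpl. ring.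
  - replace (2 * sin (mu * S) / mu) with ((fun s => sin (mu*s)/mu) S - (fun s => sin (mu*s)/mu) (-S)).
    apply (RI_deriv (fun s => sin (mu*s)/mu)).
    + intros x. auto_derive; auto. field. auto.
    + apply cont_cos_lin.
    + simpl. replace (mu * - S) with (- (mu * S)) by ring. rewrite sin_neg. field. auto.
Qed.

Lemma Ic_even S mu : Ic S (- mu) = Ic S mu.
Proof. unfold Ic. destruct (Req_EM_T (-mu) 0), (Req_EM_T mu 0); try lra; auto.
  replace (- mu * S) with (- (mu * S)) by ring. rewrite sin_neg. field. auto. Qed.

Lemma Ic_0 S : Ic S 0 = 2 * S.
Proof. unfold Ic. destruct (Req_EM_T 0 0); lra. Qed.

Lemma RI_sin S mu : is_RInt (fun s => sin (mu * s)) (-S) S 0.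
Proof.
  destruct (Req_EM_T mu 0) as [->|n].
  - replace 0 with ((fun _ : R => 0) S - (fun _ : R => 0) (-S)) by (simpl; ring).
    apply (RI_deriv (fun _ => 0)).
    + intros x. auto_derive; auto. rewrite Rminus_0_r, Rmult_0_l, sin_0; auto.
    + intros x. apply (@ex_derive_continuous R_AbsRing R_NormedModule). auto_derive. auto.
  - replace 0 with ((fun s => - cos (mu*s)/mu) S - (fun s => - cos (mu*s)/mu) (-S)).
    apply (RI_deriv (fun s => - cos (mu*s)/mu)).
    + intros x. auto_derive; auto. field. auto.
    + apply cont_sin_lin.
    + simpl. replace (mu * - S) with (- (mu * S)) by ring. rewrite cos_neg. field. auto.
Qed.

Lemma RI_xcos S mu : is_RInt (fun s => s * cos (mu * s)) (-S) S 0.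
Proof.
  destruct (Req_EM_T mu 0) as [->|n].
  - apply is_RInt_ext with (fun s => s).
    { intros; simpl; rewrite Rmult_0_l, cos_0; ring. }
    replace 0 with ((fun s => s*s/2) S - (fun s => s*s/2) (-S)) by (simpl; field).
    apply (RI_deriv (fun s => s*s/2)).
    + intros x. auto_derive; auto. field.
    + intros x. apply (@ex_derive_continuous R_AbsRing R_NormedModule). auto_derive. auto.
  - replace 0 with ((fun s => cos (mu*s)/(mu*mu) + s * sin (mu*s)/mu) S - (fun s => cos (mu*s)/(mu*mu) + s * sin (mu*s)/mu) (-S)).
    apply (RI_deriv (fun s => cos (mu*s)/(mu*mu) + s * sin (mu*s)/mu)).
    + intros x. auto_derive; auto. field. auto.
    + intros x. apply (@ex_derive_continuous R_AbsRing R_NormedModule). auto_derive. auto.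
    + simpl. replace (mu * - S) with (- (mu * S)) by ring. rewrite cos_neg, sin_neg. field. auto.
Qed.

Lemma RI_xsin S mu : mu <> 0 -> is_RInt (fun s => s * sin (mu * s)) (-S) S
   (2 * sin (mu * S) / (mu * mu) - 2 * S * cos (mu * S) / mu).
Proof.
  intros n.
  replace (2 * sin (mu * S) / (mu * mu) - 2 * S * cos (mu * S) / mu)
   with ((fun s => sin (mu*s)/(mu*mu) - s * cos (mu*s)/mu) S - (fun s => sin (mu*s)/(mu*mu) - s * cos (mu*s)/mu) (-S)).
    apply (RI_deriv (fun s => sin (mu*s)/(mu*mu) - s * cos (mu*s)/mu)).
    + intros x. auto_derive; auto. field. auto.
    + intros x. apply (@ex_derive_continuous R_AbsRing R_NormedModule). auto_derive. auto.
    + simpl. replace (mu * - S) with (- (mu * S)) by ring. rewrite cos_neg, sin_neg. field. auto.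
Qed.

Lemma RI_cc S nu la : is_RInt (fun s => cos (nu * s) * cos (la * s)) (-S) S ((Ic S (nu - la) + Ic S (nu + la))/2).
Proof.
  apply is_RInt_ext with (fun s => /2 * cos ((nu - la) * s) + /2 * cos ((nu + la) * s)).
  - intros x _. simpl. replace ((nu - la) * x) with (nu * x - la * x) by ring.
    replace ((nu + la) * x) with (nu * x + la * x) by ring. rewrite cos_minus, cos_plus. field.
  - replace ((Ic S (nu - la) + Ic S (nu + la))/2) with (/2 * Ic S (nu - la) + /2 * Ic S (nu + la)) by field.
    apply RI_lin; apply RI_cos.
Qed.

Lemma RI_ss S nu la : is_RInt (fun s => sin (nu * s) * sin (la * s)) (-S) S ((Ic S (nu - la) - Ic S (nu + la))/2).
Proof.
  apply is_RInt_ext with (fun s => /2 * cos ((nu - la) * s) + (-/2) * cos ((nu + la) * s)).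
  - intros x _. simpl. replace ((nu - la) * x) with (nu * x - la * x) by ring.
    replace ((nu + la) * x) with (nu * x + la * x) by ring. rewrite cos_minus, cos_plus. field.
  - replace ((Ic S (nu - la) - Ic S (nu + la))/2) with (/2 * Ic S (nu - la) + (-/2) * Ic S (nu + la)) by field.
    apply RI_lin; apply RI_cos.
Qed.

Lemma RI_cs S nu la : is_RInt (fun s => cos (nu * s) * sin (la * s)) (-S) S 0.
Proof.
  apply is_RInt_ext with (fun s => /2 * sin ((la + nu) * s) + /2 * sin ((la - nu) * s)).
  - intros x _. simpl. replace ((la - nu) * x) with (la * x - nu * x) by ring.
    replace ((la + nu) * x) with (la * x + nu * x) by ring. rewrite sin_minus, sin_plus. field.
  - replace 0 with (/2 * 0 + /2 * 0) by field. apply RI_lin; apply RI_sin.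
Qed.

Lemma RI_sc S nu la : is_RInt (fun s => sin (nu * s) * cos (la * s)) (-S) S 0.
Proof.
  apply is_RInt_ext with (fun s => /2 * sin ((nu + la) * s) + /2 * sin ((nu - la) * s)).
  - intros x _. simpl. replace ((nu - la) * x) with (nu * x - la * x) by ring.
    replace ((nu + la) * x) with (nu * x + la * x) by ring. rewrite sin_minus, sin_plus. field.
  - replace 0 with (/2 * 0 + /2 * 0) by field. apply RI_lin; apply RI_sin.
Qed.

Lemma sin_nPI (M : nat) : sin (INR M * PI) = 0.
Proof. induction M. - simpl. rewrite Rmult_0_l. apply sin_0.
  - rewrite S_INR. replace ((INR M + 1) * PI) with (INR M * PI + PI) by ring. rewrite neg_sin, IHM. ring. Qed.

Definition nu2 m := 1 + / m.
Definition nu3 m := 1 - / m.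
Definition SS m := m * PI.
Definition Ge m s := - cos (1 * s) - (nu2 m)^2/2 * cos (nu2 m * s) - (nu3 m)^2/2 * cos (nu3 m * s).
Definition Go m s := - sin (1 * s) - (nu2 m)^2/2 * sin (nu2 m * s) - (nu3 m)^2/2 * sin (nu3 m * s).
Definition Ev m l := - ((Ic (SS m) (1 - l) + Ic (SS m) (1 + l))/2)
   - (nu2 m)^2/2 * ((Ic (SS m) (nu2 m - l) + Ic (SS m) (nu2 m + l))/2)
   - (nu3 m)^2/2 * ((Ic (SS m) (nu3 m - l) + Ic (SS m) (nu3 m + l))/2).
Definition Ov m l := - ((Ic (SS m) (1 - l) - Ic (SS m) (1 + l))/2)
   - (nu2 m)^2/2 * ((Ic (SS m) (nu2 m - l) - Ic (SS m) (nu2 m + l))/2)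
   - (nu3 m)^2/2 * ((Ic (SS m) (nu3 m - l) - Ic (SS m) (nu3 m + l))/2).
Definition Wf m mu := Ic (SS m) mu + / 2 * Ic (SS m) (mu + / m) + / 2 * Ic (SS m) (mu - / m).

Lemma RI_lin3 (f1 f2 f3 : R -> R) a b I1 I2 I3 c1 c2 c3 :
  is_RInt f1 a b I1 -> is_RInt f2 a b I2 -> is_RInt f3 a b I3 ->
  is_RInt (fun x => c1 * f1 x + c2 * f2 x + c3 * f3 x) a b (c1 * I1 + c2 * I2 + c3 * I3).
Proof.
  intros H1 H2 H3.
  apply is_RInt_ext with (fun x => 1 * (c1 * f1 x + c2 * f2 x) + c3 * f3 x).
  - intros; simpl; ring.
  - replace (c1 * I1 + c2 * I2 + c3 * I3) with (1 * (c1 * I1 + c2 * I2) + c3 * I3) by ring.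
    apply RI_lin; auto. apply RI_lin; auto.
Qed.

Lemma KGe_cos m l : is_RInt (fun s => Ge m s * cos (l * s)) (- SS m) (SS m) (Ev m l).
Proof.
  apply RI_ext with (fun s => (-1) * (cos (1 * s) * cos (l * s)) + (- (nu2 m)^2/2) * (cos (nu2 m * s) * cos (l * s))
      + (- (nu3 m)^2/2) * (cos (nu3 m * s) * cos (l * s))).
  - intros; cbv beta; unfold Ge; field.
  - unfold Ev. replace (1 - l) with (1 - l) by ring.
    match goal with |- is_RInt _ _ _ ?v => replace v with
     ((-1) * ((Ic (SS m) (1 - l) + Ic (SS m) (1 + l))/2) + (- (nu2 m)^2/2) * ((Ic (SS m) (nu2 m - l) + Ic (SS m) (nu2 m + l))/2)
      + (- (nu3 m)^2/2) * ((Ic (SS m) (nu3 m - l) + Ic (SS m) (nu3 m + l))/2)) by field end.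
    apply RI_lin3; apply RI_cc.
Qed.

Lemma KGo_sin m l : is_RInt (fun s => Go m s * sin (l * s)) (- SS m) (SS m) (Ov m l).
Proof.
  apply RI_ext with (fun s => (-1) * (sin (1 * s) * sin (l * s)) + (- (nu2 m)^2/2) * (sin (nu2 m * s) * sin (l * s))
      + (- (nu3 m)^2/2) * (sin (nu3 m * s) * sin (l * s))).
  - intros; cbv beta; unfold Go; field.
  - unfold Ov.
    match goal with |- is_RInt _ _ _ ?v => replace v with
     ((-1) * ((Ic (SS m) (1 - l) - Ic (SS m) (1 + l))/2) + (- (nu2 m)^2/2) * ((Ic (SS m) (nu2 m - l) - Ic (SS m) (nu2 m + l))/2)
      + (- (nu3 m)^2/2) * ((Ic (SS m) (nu3 m - l) - Ic (SS m) (nu3 m + l))/2)) by field end.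
    apply RI_lin3; apply RI_ss.
Qed.

Lemma KGe_sin m l : is_RInt (fun s => Ge m s * sin (l * s)) (- SS m) (SS m) 0.
Proof.
  apply RI_ext with (fun s => (-1) * (cos (1 * s) * sin (l * s)) + (- (nu2 m)^2/2) * (cos (nu2 m * s) * sin (l * s))
      + (- (nu3 m)^2/2) * (cos (nu3 m * s) * sin (l * s))).
  - intros; cbv beta; unfold Ge; field.
  - replace 0 with ((-1) * 0 + (- (nu2 m)^2/2) * 0 + (- (nu3 m)^2/2) * 0) by field.
    apply RI_lin3; apply RI_cs.
Qed.

Lemma KGo_cos m l : is_RInt (fun s => Go m s * cos (l * s)) (- SS m) (SS m) 0.
Proof.
  apply RI_ext with (fun s => (-1) * (sin (1 * s) * cos (l * s)) + (- (nu2 m)^2/2) * (sin (nu2 m * s) * cos (l * s))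
      + (- (nu3 m)^2/2) * (sin (nu3 m * s) * cos (l * s))).
  - intros; cbv beta; unfold Go; field.
  - replace 0 with ((-1) * 0 + (- (nu2 m)^2/2) * 0 + (- (nu3 m)^2/2) * 0) by field.
    apply RI_lin3; apply RI_sc.
Qed.

Lemma KGe_x m : is_RInt (fun s => Ge m s * s) (- SS m) (SS m) 0.
Proof.
  apply RI_ext with (fun s => (-1) * (s * cos (1 * s)) + (- (nu2 m)^2/2) * (s * cos (nu2 m * s))
      + (- (nu3 m)^2/2) * (s * cos (nu3 m * s))).
  - intros; cbv beta; unfold Ge; field.
  - replace 0 with ((-1) * 0 + (- (nu2 m)^2/2) * 0 + (- (nu3 m)^2/2) * 0) by field.
    apply RI_lin3; apply RI_xcos.
Qed.

Lemma sin_mPI a : sin (a - PI) = - sin a.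
Proof. rewrite sin_minus, cos_PI, sin_PI. ring. Qed.


Lemma trig6 m l (Hm : m <> 0) (Hs : sin (SS m) = 0) :
  (1 - l) * Ic (SS m) (1 - l) = -2 * cos (SS m) * sin (l * SS m) /\
  (1 + l) * Ic (SS m) (1 + l) = 2 * cos (SS m) * sin (l * SS m) /\
  (nu2 m - l) * Ic (SS m) (nu2 m - l) = 2 * cos (SS m) * sin (l * SS m) /\
  (nu2 m + l) * Ic (SS m) (nu2 m + l) = -2 * cos (SS m) * sin (l * SS m) /\
  (nu3 m - l) * Ic (SS m) (nu3 m - l) = 2 * cos (SS m) * sin (l * SS m) /\
  (nu3 m + l) * Ic (SS m) (nu3 m + l) = -2 * cos (SS m) * sin (l * SS m).
Proof.
  rewrite !Ic_mul.
  replace ((1 - l) * SS m) with (SS m - l * SS m) by ring.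
  replace ((1 + l) * SS m) with (SS m + l * SS m) by ring.
  replace ((nu2 m - l) * SS m) with ((SS m - l * SS m) + PI) by (unfold nu2, SS; field; auto).
  replace ((nu2 m + l) * SS m) with ((SS m + l * SS m) + PI) by (unfold nu2, SS; field; auto).
  replace ((nu3 m - l) * SS m) with ((SS m - l * SS m) - PI) by (unfold nu3, SS; field; auto).
  replace ((nu3 m + l) * SS m) with ((SS m + l * SS m) - PI) by (unfold nu3, SS; field; auto).
  rewrite !neg_sin, !sin_mPI, sin_minus, sin_plus, Hs.
  repeat split; ring.
Qed.

Lemma Ev_W m l (Hm : m <> 0) (Hs : sin (SS m) = 0) :
  Ev m l = - (l * l / 2) * (Wf m (l - 1) + Wf m (l + 1)).
Proof.
  destruct (trig6 m l Hm Hs) as (H1 & H2 & H3 & H4 & H5 & H6).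
  unfold Ev, Wf.
  replace (l - 1) with (- (1 - l)) by ring.
  replace (- (1 - l) + / m) with (- (nu3 m - l)) by (unfold nu3; ring).
  replace (- (1 - l) - / m) with (- (nu2 m - l)) by (unfold nu2; ring).
  replace (l + 1 + / m) with (nu2 m + l) by (unfold nu2; ring).
  replace (l + 1 - / m) with (nu3 m + l) by (unfold nu3; ring).
  replace (l + 1) with (1 + l) by ring.
  rewrite !Ic_even.
  apply Rminus_diag_uniq.
  match goal with |- ?a - ?b = 0 => replace (a - b) with
   (-(1/2)*((1+l)*((1-l)*Ic (SS m) (1 - l)) + (1-l)*((1+l)*Ic (SS m) (1 + l)))
    - (1/4)*((nu2 m+l)*((nu2 m-l)*Ic (SS m) (nu2 m - l)) + (nu2 m-l)*((nu2 m+l)*Ic (SS m) (nu2 m + l)))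
    - (1/4)*((nu3 m+l)*((nu3 m-l)*Ic (SS m) (nu3 m - l)) + (nu3 m-l)*((nu3 m+l)*Ic (SS m) (nu3 m + l)))) by field end.
  rewrite H1, H2, H3, H4, H5, H6. unfold nu2, nu3. field. auto.
Qed.

Lemma Ov_W m l (Hm : m <> 0) (Hs : sin (SS m) = 0) :
  Ov m l = - (l * l / 2) * (Wf m (l - 1) - Wf m (l + 1)).
Proof.
  destruct (trig6 m l Hm Hs) as (H1 & H2 & H3 & H4 & H5 & H6).
  unfold Ov, Wf.
  replace (l - 1) with (- (1 - l)) by ring.
  replace (- (1 - l) + / m) with (- (nu3 m - l)) by (unfold nu3; ring).
  replace (- (1 - l) - / m) with (- (nu2 m - l)) by (unfold nu2; ring).
  replace (l + 1 + / m) with (nu2 m + l) by (unfold nu2; ring).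
  replace (l + 1 - / m) with (nu3 m + l) by (unfold nu3; ring).
  replace (l + 1) with (1 + l) by ring.
  rewrite !Ic_even.
  apply Rminus_diag_uniq.
  match goal with |- ?a - ?b = 0 => replace (a - b) with
   (-(1/2)*((1+l)*((1-l)*Ic (SS m) (1 - l)) - (1-l)*((1+l)*Ic (SS m) (1 + l)))
    - (1/4)*((nu2 m+l)*((nu2 m-l)*Ic (SS m) (nu2 m - l)) - (nu2 m-l)*((nu2 m+l)*Ic (SS m) (nu2 m + l)))
    - (1/4)*((nu3 m+l)*((nu3 m-l)*Ic (SS m) (nu3 m - l)) - (nu3 m-l)*((nu3 m+l)*Ic (SS m) (nu3 m + l)))) by field end.
  rewrite H1, H2, H3, H4, H5, H6. unfold nu2, nu3. field. auto.
Qed.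

Lemma W_id m mu (Hm : m <> 0) :
  Wf m mu * (mu * (mu * mu - / m * / m)) = - 2 * sin (mu * SS m) / (m * m).
Proof.
  unfold Wf.
  assert (H1 := Ic_mul (SS m) mu).
  assert (H2 := Ic_mul (SS m) (mu + / m)).
  assert (H3 := Ic_mul (SS m) (mu - / m)).
  replace ((mu + / m) * SS m) with (mu * SS m + PI) in H2 by (unfold SS; field; auto).
  replace ((mu - / m) * SS m) with (mu * SS m - PI) in H3 by (unfold SS; field; auto).
  rewrite neg_sin in H2. rewrite sin_mPI in H3.
  match goal with |- ?a = _ => replace a with
    ((mu * mu - / m * / m) * (mu * Ic (SS m) mu) + / 2 * (mu * (mu - / m)) * ((mu + / m) * Ic (SS m) (mu + / m))
     + / 2 * (mu * (mu + / m)) * ((mu - / m) * Ic (SS m) (mu - / m))) by (field; auto) end.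
  rewrite H1, H2, H3. field. auto.
Qed.

Lemma W_bound m mu (Hm : 2 <= m) (Hmu : 2 / m <= Rabs mu) :
  Rabs (Wf m mu) <= 8 / (3 * (m * m) * (Rabs mu * Rabs mu * Rabs mu)).
Proof.
  assert (m0 : m <> 0) by lra.
  assert (Hid := W_id m mu m0).
  set (a := Rabs mu) in *.
  assert (Hm2 : 0 < m) by lra.
  assert (Ha : 0 < a) by (apply Rlt_le_trans with (2/m); auto; apply Rdiv_lt_0_compat; lra).
  assert (Hmu2 : mu * mu = a * a) by (unfold a; rewrite <- Rabs_mult, Rabs_right; auto; apply Rle_ge; apply Rle_0_sqr).
  assert (Hinv : / m * / m <= a * a / 4).
  { assert (2 / m * (2/m) <= a * a) by (apply Rmult_le_compat; try lra; apply Rdiv_le_0_compat; lra).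
    replace (2/m * (2/m)) with (4 * (/m * /m)) in H by (field; auto). lra. }
  assert (HP : 3/4 * (a * a * a) <= Rabs (mu * (mu * mu - / m * / m))).
  { rewrite Rabs_mult. fold a. rewrite (Rabs_right (mu * mu - / m * / m)). rewrite Hmu2.
    assert (0 <= a * (a*a/4)) by (apply Rmult_le_pos; nra). nra.
    rewrite Hmu2. nra. }
  assert (HW : Rabs (Wf m mu) * Rabs (mu * (mu * mu - / m * / m)) <= 2 / (m * m)).
  { rewrite <- Rabs_mult, Hid. destruct (SIN_bound (mu * SS m)).
    assert (0 < / (m * m)) by (apply Rinv_0_lt_compat; nra).
    unfold Rdiv. apply Rabs_le. split; nra. }
  assert (Hw0 := Rabs_pos (Wf m mu)).
  assert (H3 : Rabs (Wf m mu) * (3/4 * (a*a*a)) <= 2 / (m * m)).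
  { apply Rle_trans with (2 := HW). apply Rmult_le_compat_l; auto. }
  assert (0 < a*a*a) by (apply Rmult_lt_0_compat; nra).
  apply Rmult_le_reg_r with (3 * (m * m) * (a * a * a)). apply Rmult_lt_0_compat; nra.
  replace (8 / (3 * (m * m) * (a * a * a)) * (3 * (m * m) * (a * a * a))) with 8 by (field; lra).
  replace (2 / (m*m)) with (2 * / (m*m)) in H3 by (unfold Rdiv; ring).
  assert (Hmm : 0 < m * m) by nra.
  assert (E: Rabs (Wf m mu) * (3/4 * (a * a * a)) * (m*m) <= 2) .
  { apply Rle_trans with (2 * / (m * m) * (m*m)). apply Rmult_le_compat_r; lra. right; field; lra. }
  nra.
Qed.

Lemma W_0 m (Hm : m <> 0) : Wf m 0 = 2 * SS m.
Proof.
  unfold Wf. rewrite Ic_0. replace (0 + / m) with (/ m) by ring. replace (0 - / m) with (- / m) by ring.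
  rewrite Ic_even. unfold Ic. destruct (Req_EM_T (/m) 0) as [e|n].
  - exfalso. apply Rinv_neq_0_compat in Hm. auto.
  - replace (/ m * SS m) with PI by (unfold SS; field; auto). rewrite sin_PI. field. auto.
Qed.

Lemma W_bound2 m mu d (Hm : 2 <= m) (Hd : 2 / m <= d) (Hmu : d <= Rabs mu) :
  Rabs (Wf m mu) <= 8 / (3 * (m * m) * (d * d * d)).
Proof.
  assert (H := W_bound m mu Hm ltac:(lra)).
  apply Rle_trans with (1 := H).
  assert (0 < d) by (apply Rlt_le_trans with (2/m); auto; apply Rdiv_lt_0_compat; lra).
  assert (0 < m * m) by nra.
  unfold Rdiv. apply Rmult_le_compat_l. lra.
  apply Rinv_le_contravar. apply Rmult_lt_0_compat. lra. apply Rmult_lt_0_compat; nra.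
  apply Rmult_le_compat_l. lra.
  assert (d * d <= Rabs mu * Rabs mu) by nra. nra.
Qed.

Definition Ck m d := 8 / (3 * (m * m) * (d * d * d)).

Lemma Ev_low m l d (Hm : 2 <= m) (Hs : sin (SS m) = 0) (Hd : 2 / m <= d) (Hd1 : d <= 1)
  (Hl : 0 <= l) (Hld : d <= 1 - l) :
  Rabs (Ev m l) <= Ck m d * (l * l) /\ Rabs (Ov m l) <= Ck m d * (l * l).
Proof.
  assert (m0 : m <> 0) by (intro; lra).
  rewrite (Ev_W m l m0 Hs), (Ov_W m l m0 Hs).
  assert (d0: 0 < d) by (apply Rlt_le_trans with (2/m); auto; apply Rdiv_lt_0_compat; lra).
  assert (A1 : d <= Rabs (l - 1)) by (rewrite Rabs_left1; lra).
  assert (A2 : d <= Rabs (l + 1)) by (rewrite Rabs_right; lra).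
  assert (H1 := W_bound2 m (l - 1) d Hm Hd A1).
  assert (H2 := W_bound2 m (l + 1) d Hm Hd A2).
  fold (Ck m d) in H1, H2.
  assert (0 <= l * l / 2) by (apply Rmult_le_pos; nra).
  rewrite !Rabs_mult, Rabs_Ropp, !(Rabs_right (l * l / 2)) by lra.
  split.
  - apply Rle_trans with (l * l / 2 * (Rabs (Wf m (l - 1)) + Rabs (Wf m (l + 1)))).
    apply Rmult_le_compat_l; auto. apply Rabs_triang.
    apply Rle_trans with (l*l/2*(2*Ck m d)); [apply Rmult_le_compat_l; lra | right; field].
  - apply Rle_trans with (l * l / 2 * (Rabs (Wf m (l - 1)) + Rabs (Wf m (l + 1)))).
    apply Rmult_le_compat_l; auto. unfold Rminus; rewrite <- (Rabs_Ropp (Wf m (l+1))); apply Rabs_triang.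
    apply Rle_trans with (l*l/2*(2*Ck m d)); [apply Rmult_le_compat_l; lra | right; field].
Qed.

Lemma Ev_high m l d (Hm : 2 <= m) (Hs : sin (SS m) = 0) (Hd : 2 / m <= d) (Hd1 : d <= 1)
  (Hl : 0 < l) (Hld : d * l <= l - 1) :
  Rabs (Ev m l) <= Ck m d / l /\ Rabs (Ov m l) <= Ck m d / l.
Proof.
  assert (m0 : m <> 0) by (intro; lra).
  rewrite (Ev_W m l m0 Hs), (Ov_W m l m0 Hs).
  assert (d0: 0 < d) by (apply Rlt_le_trans with (2/m); auto; apply Rdiv_lt_0_compat; lra).
  assert (l1 : 1 <= l) by nra.
  assert (Hdl : 2 / m <= d * l) by nra.
  assert (A1 : d * l <= Rabs (l - 1)) by (rewrite Rabs_right; lra).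
  assert (A2 : d * l <= Rabs (l + 1)) by (rewrite Rabs_right; nra).
  assert (H1 := W_bound2 m (l - 1) (d * l) Hm Hdl A1).
  assert (H2 := W_bound2 m (l + 1) (d * l) Hm Hdl A2).
  assert (E : 8 / (3 * (m * m) * (d * l * (d * l) * (d * l))) = Ck m d / (l * l * l))
    by (unfold Ck; field; repeat split; lra).
  rewrite E in H1, H2.
  assert (0 <= l * l / 2) by (apply Rmult_le_pos; nra).
  rewrite !Rabs_mult, Rabs_Ropp, !(Rabs_right (l * l / 2)) by lra.
  assert (Ck m d / l = l * l / 2 * (2 * (Ck m d / (l * l * l)))) by (field; lra).
  split.
  - apply Rle_trans with (l * l / 2 * (Rabs (Wf m (l - 1)) + Rabs (Wf m (l + 1)))).
    apply Rmult_le_compat_l; auto. apply Rabs_triang.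
    rewrite H0. apply Rmult_le_compat_l; lra.
  - apply Rle_trans with (l * l / 2 * (Rabs (Wf m (l - 1)) + Rabs (Wf m (l + 1)))).
    apply Rmult_le_compat_l; auto. unfold Rminus; rewrite <- (Rabs_Ropp (Wf m (l+1))); apply Rabs_triang.
    rewrite H0. apply Rmult_le_compat_l; lra.
Qed.

Lemma Ev_main m (Hm : 2 <= m) (Hs : sin (SS m) = 0) :
  SS m - 1 <= Rabs (Ev m 1) /\ SS m - 1 <= Rabs (Ov m 1).
Proof.
  assert (m0 : m <> 0) by (intro; lra).
  rewrite (Ev_W m 1 m0 Hs), (Ov_W m 1 m0 Hs).
  replace (1 - 1) with 0 by ring. replace (1 + 1) with 2 by ring.
  rewrite (W_0 m m0).
  assert (H2 := W_bound2 m 2 2 Hm ltac:(apply Rle_trans with 1; [apply Rmult_le_reg_r with m; [lra| unfold Rdiv; rewrite Rmult_assoc, Rinv_l; lra] | lra]) ltac:(rewrite Rabs_right; lra)).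
  assert (8 / (3 * (m * m) * (2 * 2 * 2)) <= 1).
  { apply Rmult_le_reg_r with (3 * (m * m) * (2 * 2 * 2)). nra.
    unfold Rdiv. rewrite Rmult_assoc, Rinv_l by nra. nra. }
  assert (4 <= SS m) by (unfold SS; assert (H5 := PI2_1); nra).
  destruct (Rabs_def2 _ _ (Rle_lt_trans _ _ (1 + 1) H2 ltac:(lra))).
  split; rewrite Rabs_mult, Rabs_Ropp, Rabs_right by lra.
  - rewrite Rabs_right by lra. lra.
  - rewrite Rabs_right by lra. lra.
Qed.

Lemma Ge_bound m s (Hm : 2 <= m) : Rabs (Ge m s) <= 4 /\ Rabs (Go m s) <= 4.
Proof.
  assert (0 < / m <= / 2) by (split; [apply Rinv_0_lt_compat; lra | apply Rinv_le_contravar; lra]).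
  assert (0 <= nu2 m ^ 2 <= 9/4) by (unfold nu2; split; nra).
  assert (0 <= nu3 m ^ 2 <= 1) by (unfold nu3; split; nra).
  unfold Ge, Go.
  destruct (COS_bound (1 * s)), (COS_bound (nu2 m * s)), (COS_bound (nu3 m * s)).
  destruct (SIN_bound (1 * s)), (SIN_bound (nu2 m * s)), (SIN_bound (nu3 m * s)).
  split; apply Rabs_le; split; nra.
Qed.

Lemma KGo_x m (Hm : 2 <= m) (Hs : sin (SS m) = 0) : is_RInt (fun s => Go m s * s) (- SS m) (SS m) 0.
Proof.
  assert (m0 : m <> 0) by (intro; lra).
  assert (0 < / m <= / 2) by (split; [apply Rinv_0_lt_compat; lra | apply Rinv_le_contravar; lra]).
  assert (n1 : (1:R) <> 0) by lra.
  assert (n2 : nu2 m <> 0) by (unfold nu2; intro; lra).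
  assert (n3 : nu3 m <> 0) by (unfold nu3; intro; lra).
  apply RI_ext with (fun s => (-1) * (s * sin (1 * s)) + (- (nu2 m)^2/2) * (s * sin (nu2 m * s))
      + (- (nu3 m)^2/2) * (s * sin (nu3 m * s))).
  - intros; cbv beta; unfold Go; field.
  - assert (E: 0 = (-1) * (2 * sin (1 * SS m) / (1 * 1) - 2 * SS m * cos (1 * SS m) / 1)
       + (- (nu2 m)^2/2) * (2 * sin (nu2 m * SS m) / (nu2 m * nu2 m) - 2 * SS m * cos (nu2 m * SS m) / nu2 m)
       + (- (nu3 m)^2/2) * (2 * sin (nu3 m * SS m) / (nu3 m * nu3 m) - 2 * SS m * cos (nu3 m * SS m) / nu3 m)).
    { replace (nu2 m * SS m) with (SS m + PI) by (unfold nu2, SS; field; auto).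
      replace (nu3 m * SS m) with (SS m - PI) by (unfold nu3, SS; field; auto).
      rewrite neg_sin, neg_cos, sin_mPI, Rmult_1_l, Hs.
      rewrite cos_minus, cos_PI, sin_PI.
      unfold nu2, nu3. field. repeat split; intro; lra. }
    rewrite E. apply RI_lin3; apply RI_xsin; auto.
Qed.

Lemma KGe_1 m (Hm : 2 <= m) (Hs : sin (SS m) = 0) : is_RInt (fun s => Ge m s) (- SS m) (SS m) 0.
Proof.
  assert (m0 : m <> 0) by (intro; lra).
  assert (H := KGe_cos m 0). rewrite (Ev_W m 0 m0 Hs) in H.
  replace (- (0 * 0 / 2) * (Wf m (0 - 1) + Wf m (0 + 1))) with 0 in H by field.
  revert H. apply RI_ext. intros x. rewrite Rmult_0_l, cos_0. ring.
Qed.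

Lemma KGo_1 m : is_RInt (fun s => Go m s) (- SS m) (SS m) 0.
Proof.
  assert (H := KGo_cos m 0). revert H. apply RI_ext. intros x. rewrite Rmult_0_l, cos_0. ring.
Qed.


Lemma cmod_sq x y : 0 <= cmod x y /\ cmod x y * cmod x y = x * x + y * y.
Proof.
  unfold cmod. split. apply sqrt_pos.
  rewrite sqrt_sqrt. ring. nra.
Qed.

Lemma cmod_ge x y : Rabs x <= cmod x y /\ Rabs y <= cmod x y /\ cmod x y <= Rabs x + Rabs y.
Proof.
  destruct (cmod_sq x y) as [H0 H1]. set (A := cmod x y) in *.
  assert (Rabs x * Rabs x = x * x) by (rewrite <- Rabs_mult; apply Rabs_right; nra).
  assert (Rabs y * Rabs y = y * y) by (rewrite <- Rabs_mult; apply Rabs_right; nra).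
  assert (0 <= Rabs x) by apply Rabs_pos. assert (0 <= Rabs y) by apply Rabs_pos.
  repeat split; nra.
Qed.

Lemma term_bound ax ay b t j :
  Rabs (term_re ax ay b t j) <= cmod (ax j) (ay j) /\ Rabs (term_im ax ay b t j) <= cmod (ax j) (ay j).
Proof.
  destruct (cmod_sq (ax j) (ay j)) as [H0 H1]. set (A := cmod (ax j) (ay j)) in *.
  unfold term_re, term_im. set (c := cos (b j * t)). set (s := sin (b j * t)).
  assert (E : s * s + c * c = 1) by (unfold s, c; rewrite <- !Rsqr_pow2 || idtac; assert (H := sin2_cos2 (b j * t)); unfold Rsqr in H; lra).
  assert (Q : (ax j * c - ay j * s) * (ax j * c - ay j * s) + (ax j * s + ay j * c) * (ax j * s + ay j * c)
    = (ax j * ax j + ay j * ay j) * (s * s + c * c)) by ring.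
  rewrite E, Rmult_1_r, <- H1 in Q.
  assert (K1 : (ax j * c - ay j * s) * (ax j * c - ay j * s) <= A * A).
  { assert (0 <= (ax j * s + ay j * c) * (ax j * s + ay j * c)) by apply Rle_0_sqr. lra. }
  assert (K2 : (ax j * s + ay j * c) * (ax j * s + ay j * c) <= A * A).
  { assert (0 <= (ax j * c - ay j * s) * (ax j * c - ay j * s)) by apply Rle_0_sqr. lra. }
  split; apply Rabs_le; split; nra.
Qed.

Lemma term_shift ax ay b t0 h j :
  term_re ax ay b (t0 + h) j = term_re ax ay b t0 j * cos (b j * h) - term_im ax ay b t0 j * sin (b j * h).
Proof.
  unfold term_re, term_im. replace (b j * (t0 + h)) with (b j * t0 + b j * h) by ring.
  rewrite cos_plus, sin_plus. ring.
Qed.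

Lemma term_im_re ax ay b t j : term_im ax ay b t j = term_re ay (fun k => - ax k) b t j.
Proof. unfold term_im, term_re. ring. Qed.

Lemma cmod_swap x y : cmod y (- x) = cmod x y.
Proof. unfold cmod. f_equal. ring. Qed.

Lemma sum_diff_bound (u A : nat -> R) (HA : forall j, Rabs (u j) <= A j) N k :
  Rabs (sum_f_R0 u (N + k) - sum_f_R0 u N) <= sum_f_R0 A (N + k) - sum_f_R0 A N.
Proof.
  induction k.
  - rewrite Nat.add_0_r. replace (sum_f_R0 u N - sum_f_R0 u N) with 0 by ring. rewrite Rabs_R0. lra.
  - rewrite Nat.add_succ_r. simpl. 
    replace (sum_f_R0 u (N + k) + u (S (N + k)) - sum_f_R0 u N) with
      ((sum_f_R0 u (N + k) - sum_f_R0 u N) + u (S (N + k))) by ring.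
    eapply Rle_trans. apply Rabs_triang. specialize (HA (S (N + k))). lra.
Qed.

Lemma tail_bound (u A : nat -> R) g l (HA : forall j, Rabs (u j) <= A j)
  (Hl : Un_cv (sum_f_R0 A) l) (Hg : Un_cv (sum_f_R0 u) g) N :
  Rabs (g - sum_f_R0 u N) <= l - sum_f_R0 A N.
Proof.
  assert (HA0 : forall j, 0 <= A j) by (intro j; eapply Rle_trans; [apply Rabs_pos | apply HA]).
  assert (Hgr : Un_growing (sum_f_R0 A)) by (intro n; simpl; specialize (HA0 (S n)); lra).
  assert (Hle := growing_ineq _ _ Hgr Hl).
  destruct (Rle_or_lt (Rabs (g - sum_f_R0 u N)) (l - sum_f_R0 A N)) as [h|h]; auto.
  exfalso.
  destruct (Hg (Rabs (g - sum_f_R0 u N) - (l - sum_f_R0 A N))) as [M0 HM0]. lra.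
  specialize (HM0 (M0 + N)%nat ltac:(lia)).
  assert (H2 := sum_diff_bound u A HA N M0).
  replace (N + M0)%nat with (M0 + N)%nat in H2 by lia.
  specialize (Hle (M0 + N)%nat). unfold R_dist in HM0.
  assert (Rabs (g - sum_f_R0 u N) <= Rabs (sum_f_R0 u (M0 + N) - g) + Rabs (sum_f_R0 u (M0 + N) - sum_f_R0 u N)).
  { rewrite Rabs_minus_sym with (x := sum_f_R0 u (M0 + N)).
    replace (g - sum_f_R0 u N) with ((g - sum_f_R0 u (M0 + N)) + (sum_f_R0 u (M0 + N) - sum_f_R0 u N)) by ring.
    apply Rabs_triang. }
  lra.
Qed.

Lemma sumA_mono (A : nat -> R) (HA0 : forall j, 0 <= A j) n m : (n <= m)%nat -> sum_f_R0 A n <= sum_f_R0 A m.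
Proof.
  intros H. induction H. lra. simpl. specialize (HA0 (S m)). lra.
Qed.

Lemma series_cont (u : R -> nat -> R) (A : nat -> R) l g
  (HA : forall t j, Rabs (u t j) <= A j) (Hl : Un_cv (sum_f_R0 A) l)
  (Hg : forall t, Un_cv (sum_f_R0 (u t)) (g t)) (Hc : forall j t, continuity_pt (fun t => u t j) t) :
  continuity g.
Proof.
  assert (HA0 : forall j, 0 <= A j) by (intro j; eapply Rle_trans; [apply Rabs_pos | apply (HA 0 j)]).
  intro x.
  assert (Hr : 0 < 1) by lra.
  apply (CVU_continuity (fun N t => sum_f_R0 (u t) N) g x (mkposreal 1 Hr)).
  - intros eps Heps. destruct (Hl eps Heps) as [N HN]. exists N. intros n y Hn _.
    assert (H1 := tail_bound (u y) A (g y) l (HA y) Hl (Hg y) n).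
    specialize (HN N (le_n N)). unfold R_dist in HN.
    assert (H2 := sumA_mono A HA0 N n Hn).
    assert (H3 := sum_incr A N l Hl HA0).
    rewrite Rabs_left1 in HN by lra. lra.
  - intros n y _. induction n as [|k IH].
    + simpl. apply (Hc 0%nat).
    + change (continuity_pt (fun t => sum_f_R0 (u t) k + u t (S k)) y). apply continuity_pt_plus. exact IH. apply (Hc (S k)).
  - unfold Boule. rewrite Rminus_diag, Rabs_R0. simpl. lra.
Qed.

Lemma series_bound (u : nat -> R) (A : nat -> R) l g
  (HA : forall j, Rabs (u j) <= A j) (Hl : Un_cv (sum_f_R0 A) l) (Hg : Un_cv (sum_f_R0 u) g) :
  Rabs g <= l.
Proof.
  assert (H1 := tail_bound u A g l HA Hl Hg 0%nat). simpl in H1.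
  assert (H2 := HA 0%nat).
  replace g with ((g - u 0%nat) + u 0%nat) by ring. eapply Rle_trans. apply Rabs_triang. lra.
Qed.

Lemma term_re_cont ax ay b j t : continuity_pt (fun t => term_re ax ay b t j) t.
Proof. unfold term_re. reg. Qed.


Lemma RI_abs_le (f : R -> R) a b I M : a <= b -> (forall x, a <= x <= b -> Rabs (f x) <= M) ->
  is_RInt f a b I -> Rabs I <= (b - a) * M.
Proof.
  intros Hab H HI. exact (@norm_RInt_le_const R_NormedModule f a b I M Hab H HI).
Qed.

Lemma trig_sum_int (K Fc Fs : R -> R) a b
  (Hc : forall l, is_RInt (fun s => K s * cos (l * s)) a b (Fc l))
  (Hs : forall l, is_RInt (fun s => K s * sin (l * s)) a b (Fs l))
  (x y lam : nat -> R) N :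
  is_RInt (fun s => K s * sum_f_R0 (fun j => x j * cos (lam j * s) - y j * sin (lam j * s)) N) a b
    (sum_f_R0 (fun j => x j * Fc (lam j) - y j * Fs (lam j)) N).
Proof.
  induction N as [|N IH].
  - simpl. apply RI_ext with (fun s => x 0%nat * (K s * cos (lam 0%nat * s)) + (- y 0%nat) * (K s * sin (lam 0%nat * s))).
    + intros; ring.
    + replace (x 0%nat * Fc (lam 0%nat) - y 0%nat * Fs (lam 0%nat)) with (x 0%nat * Fc (lam 0%nat) + (- y 0%nat) * Fs (lam 0%nat)) by ring.
      apply RI_lin; auto.
  - simpl. apply RI_ext with (fun s => 1 * (K s * sum_f_R0 (fun j => x j * cos (lam j * s) - y j * sin (lam j * s)) N)
        + 1 * (x (S N) * (K s * cos (lam (S N) * s)) + (- y (S N)) * (K s * sin (lam (S N) * s)))).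
    + intros; ring.
    + match goal with |- is_RInt _ _ _ (?u + ?v) => replace (u + v) with
       (1 * u + 1 * (x (S N) * Fc (lam (S N)) + (- y (S N)) * Fs (lam (S N)))) by ring end.
      apply RI_lin; auto. apply RI_lin; auto.
Qed.

Lemma int_ineq (K Fc Fs : R -> R) S (HS : 0 < S)
  (HK : forall s, Rabs (K s) <= 4)
  (Hc : forall l, is_RInt (fun s => K s * cos (l * s)) (-S) S (Fc l))
  (Hs : forall l, is_RInt (fun s => K s * sin (l * s)) (-S) S (Fs l))
  (H1 : is_RInt K (-S) S 0) (Hx : is_RInt (fun s => K s * s) (-S) S 0)
  ax ay b (g : R -> R) t0 D eps eta beta r N
  (Heps : 0 <= eps) (Hbeta : 0 < beta) (Hsb : S / beta < eta)
  (Hd : forall h, Rabs h < eta -> Rabs (g (t0 + h) - g t0 - D * h) <= eps * Rabs h)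
  (Hr : forall h, Rabs (g (t0 + h) - sum_f_R0 (term_re ax ay b (t0 + h)) N) <= r) :
  Rabs (sum_f_R0 (fun j => term_re ax ay b t0 j * Fc (b j / beta) - term_im ax ay b t0 j * Fs (b j / beta)) N)
   <= 2 * S * (4 * (eps * (S / beta) + 2 * r)).
Proof.
  set (x := term_re ax ay b t0). set (y := term_im ax ay b t0).
  set (lam := fun j => b j / beta).
  set (T := fun s => sum_f_R0 (fun j => x j * cos (lam j * s) - y j * sin (lam j * s)) N).
  set (c0 := sum_f_R0 x N).
  assert (HT := trig_sum_int K Fc Fs (-S) S Hc Hs x y lam N).
  assert (HI : is_RInt (fun s => K s * (T s - c0 - D / beta * s)) (-S) S
     (1 * sum_f_R0 (fun j => x j * Fc (lam j) - y j * Fs (lam j)) N + (- c0) * 0 + (- (D / beta)) * 0)).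
  { apply RI_ext with (fun s => 1 * (K s * T s) + (- c0) * K s + (- (D / beta)) * (K s * s)).
    - intros; ring.
    - apply RI_lin3; auto. }
  replace (1 * sum_f_R0 (fun j => x j * Fc (lam j) - y j * Fs (lam j)) N + (- c0) * 0 + (- (D / beta)) * 0)
    with (sum_f_R0 (fun j => x j * Fc (lam j) - y j * Fs (lam j)) N) in HI by ring.
  replace (2 * S) with (S - - S) by ring.
  eapply RI_abs_le; [lra | | exact HI].
  intros s Hs0.
  set (h := s / beta).
  assert (HP : forall h, sum_f_R0 (term_re ax ay b (t0 + h)) N = sum_f_R0 (fun j => x j * cos (b j * h) - y j * sin (b j * h)) N).
  { intros h0. apply sum_eq. intros i _. unfold x, y. apply term_shift. }
  assert (HTs : T s = sum_f_R0 (term_re ax ay b (t0 + h)) N).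
  { rewrite HP. unfold T. apply sum_eq. intros i _. unfold lam, h. 
    replace (b i / beta * s) with (b i * (s / beta)) by (field; lra). reflexivity. }
  assert (Hc0 : c0 = sum_f_R0 (term_re ax ay b (t0 + 0)) N).
  { rewrite HP. unfold c0. apply sum_eq. intros i _. rewrite Rmult_0_r, cos_0, sin_0. ring. }
  rewrite Rplus_0_r in Hc0.
  assert (Hh : Rabs h <= S / beta).
  { unfold h, Rdiv. rewrite Rabs_mult, Rabs_inv, (Rabs_right beta) by lra.
    apply Rmult_le_compat_r. left; apply Rinv_0_lt_compat; lra. apply Rabs_le; lra. }
  assert (HQ : Rabs (T s - c0 - D / beta * s) <= eps * (S / beta) + 2 * r).
  { replace (D / beta * s) with (D * h) by (unfold h; field; lra).
    rewrite HTs, Hc0.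
    assert (E1 := Hd h ltac:(lra)).
    assert (E2 := Hr h). assert (E3 := Hr 0). rewrite Rplus_0_r in E3.
    assert (eps * Rabs h <= eps * (S / beta)) by (apply Rmult_le_compat_l; auto).
    replace (sum_f_R0 (term_re ax ay b (t0 + h)) N - sum_f_R0 (term_re ax ay b t0) N - D * h) with
      ((g (t0 + h) - g t0 - D * h) - (g (t0 + h) - sum_f_R0 (term_re ax ay b (t0 + h)) N) + (g t0 - sum_f_R0 (term_re ax ay b t0) N)) by ring.
    eapply Rle_trans. apply Rabs_triang. eapply Rle_trans. apply Rplus_le_compat_r. apply Rabs_triang.
    rewrite Rabs_Ropp. lra. }
  cbv beta. rewrite Rabs_mult. apply Rmult_le_compat; auto using Rabs_pos.
Qed.


Lemma b_mono (b : nat -> R) (Hinc : forall j, b j < b (S j)) i j : (i <= j)%nat -> b i <= b j.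
Proof. intros H. induction H. lra. specialize (Hinc m). lra. Qed.

Lemma b_lac (b : nat -> R) (Hinc : forall j, b j < b (S j)) q Nq
  (Hq : forall j, (Nq <= j)%nat -> q * b j <= b (S j)) i j :
  (Nq <= i)%nat -> (i < j)%nat -> q * b i <= b j.
Proof. intros H1 H2. specialize (Hq i H1). assert (H := b_mono b Hinc (S i) j H2). lra. Qed.

Fixpoint Tsum (f : nat -> R) (j : nat) : R := match j with O => 0 | S k => Tsum f k + f k end.

Lemma Tsum_nonneg f (H : forall j, 0 <= f j) j : 0 <= Tsum f j.
Proof. induction j; simpl. lra. specialize (H j). lra. Qed.

Lemma telescope (tau Phi : nat -> R) N :
  (forall j, (j <= N)%nat -> tau j <= Phi (S j) - Phi j) -> sum_f_R0 tau N <= Phi (S N) - Phi O.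
Proof.
  induction N; intros H; simpl.
  - apply H. lia.
  - assert (IH := IHN (fun j Hj => H j ltac:(lia))). specialize (H (S N) (le_n _)). lra.
Qed.

Lemma sum_split (u : nat -> R) n N : (n <= N)%nat ->
  sum_f_R0 u N = u n + sum_f_R0 (fun j => if Nat.eqb j n then 0 else u j) N.
Proof.
  induction N; intros H.
  - assert (n = O) by lia. subst. simpl. ring.
  - destruct (Nat.eq_dec n (S N)) as [->|ne].
    + simpl. rewrite Nat.eqb_refl.
      assert (E : sum_f_R0 (fun j => if Nat.eqb j (S N) then 0 else u j) N = sum_f_R0 u N).
      { apply sum_eq. intros i Hi. destruct (Nat.eqb_spec i (S N)); [lia | auto]. }
      rewrite E. ring.
    + rewrite !tech5. rewrite (IHN ltac:(lia)). cbv beta. assert (E: (S N =? n)%nat = false) by (apply Nat.eqb_neq; lia). rewrite E. ring.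
Qed.

Lemma sum_abs_le (u : nat -> R) N : Rabs (sum_f_R0 u N) <= sum_f_R0 (fun j => Rabs (u j)) N.
Proof. apply sum_f_R0_triangle. Qed.

Lemma low_step (C Aj An bj bj1 bn q : R) : 0 <= C -> 0 <= Aj -> Aj <= An -> 0 < bj -> bj <= bn -> 1 < q ->
  (q - 1) * bj <= bj1 - bj ->
  2 * C * Aj * (bj * bj) / bn <= (2 * C * (An * bn) / (q - 1)) * (bj1 - bj) / bn.
Proof.
  intros. assert (0 < bn) by lra.
  apply Rmult_le_reg_r with (bn * (q - 1)). nra.
  replace (2 * C * Aj * (bj * bj) / bn * (bn * (q - 1))) with (2 * C * Aj * (bj * bj) * (q - 1)) by (field; lra).
  replace (2 * C * (An * bn) / (q - 1) * (bj1 - bj) / bn * (bn * (q - 1))) with (2 * C * An * bn * (bj1 - bj)) by (field; lra).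
  assert (0 <= 2 * C * Aj) by nra.
  assert (2 * C * Aj <= 2 * C * An) by nra.
  assert (bj * bj * (q - 1) <= bj * (bj1 - bj)) by (replace (bj * bj * (q - 1)) with (bj * ((q - 1) * bj)) by ring; apply Rmult_le_compat_l; lra).
  assert (bj * (bj1 - bj) <= bn * (bj1 - bj)) by (apply Rmult_le_compat_r; nra).
  assert (bj * bj * (q - 1) <= bn * (bj1 - bj)) by lra.
  assert (0 <= bj * bj * (q - 1)) by nra.
  nra.
Qed.

Lemma high_step (C Aj An bj bjm bn q : R) : 0 <= C -> 0 <= Aj -> Aj <= An -> 0 < bn -> 0 < bjm -> 1 < q ->
  q * bjm <= bj ->
  2 * C * Aj * (bn * bn) / bj <= (2 * C * (An * bn) / (q - 1)) * bn * (/ bjm - / bj).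
Proof.
  intros. assert (0 < bj) by nra.
  apply Rmult_le_reg_r with (bj * bjm * (q - 1)). apply Rmult_lt_0_compat; nra.
  replace (2 * C * Aj * (bn * bn) / bj * (bj * bjm * (q - 1))) with (2 * C * Aj * (bn * bn) * bjm * (q - 1)) by (field; lra).
  replace ((2 * C * (An * bn) / (q - 1)) * bn * (/ bjm - / bj) * (bj * bjm * (q - 1))) with (2 * C * An * (bn * bn) * (bj - bjm)) by (field; lra).
  assert (0 <= 2 * C * Aj * (bn * bn)) by (apply Rmult_le_pos; nra).
  assert (2 * C * Aj * (bn * bn) <= 2 * C * An * (bn * bn)) by (apply Rmult_le_compat_r; nra).
  assert (bjm * (q - 1) <= bj - bjm) by nra.
  assert (0 <= bjm * (q - 1)) by nra.
  assert (2 * C * Aj * (bn * bn) * (bjm * (q - 1)) <= 2 * C * An * (bn * bn) * (bj - bjm)) by (apply Rmult_le_compat; nra).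
  nra.
Qed.

Lemma key_step (x y A b : nat -> R) (E Od : R -> R) (q C kap B : R) (Rn : nat -> R) (Nq N0 n : nat)
  (Hxy : forall j, Rabs (x j) <= A j /\ Rabs (y j) <= A j /\ A j <= Rabs (x j) + Rabs (y j))
  (Hbpos : forall j, 0 < b j) (Hinc : forall j, b j < b (S j))
  (Hq1 : 1 < q) (Hq : forall j, (Nq <= j)%nat -> q * b j <= b (S j))
  (Hk : 0 < kap) (HE1 : kap <= Rabs (E 1) /\ kap <= Rabs (Od 1)) (HC : 0 <= C)
  (Hlow : forall l, 0 <= l -> 1 - / q <= 1 - l -> Rabs (E l) <= C * (l * l) /\ Rabs (Od l) <= C * (l * l))
  (Hhigh : forall l, 0 < l -> (1 - / q) * l <= l - 1 -> Rabs (E l) <= C / l /\ Rabs (Od l) <= C / l)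
  (Hrho : 4 * C / (q - 1) <= kap / 2)
  (HN0 : (Nq < N0)%nat) (HN0n : (N0 <= n)%nat)
  (Hmax : forall j, (N0 <= j)%nat -> A j <= A n)
  (Hint : forall N, (n <= N)%nat ->
     Rabs (sum_f_R0 (fun j => x j * E (b j / b n)) N) <= B + Rn N /\
     Rabs (sum_f_R0 (fun j => y j * Od (b j / b n)) N) <= B + Rn N)
  (HR : Un_cv Rn 0) :
  kap / 2 * (A n * b n) <= 2 * b n * B + 2 * C * Tsum (fun i => A i * b i * b i) N0 / b N0.
Proof.
  assert (HA0 : forall j, 0 <= A j) by (intro j; destruct (Hxy j) as [h _]; eapply Rle_trans; [apply Rabs_pos|apply h]).
  assert (Hbn : 0 < b n) by auto.
  assert (HbN0 : 0 < b N0) by auto.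
  assert (HbN0n : b N0 <= b n) by (apply b_mono; auto).
  set (lam := fun j => b j / b n).
  set (f := fun i => A i * b i * b i).
  set (T := Tsum f N0).
  assert (HT : 0 <= T) by (apply Tsum_nonneg; intro i; unfold f; assert (0 < b i) by auto; specialize (HA0 i); nra).
  set (K := 2 * C * (A n * b n) / (q - 1)).
  assert (HK : 0 <= K) by (unfold K; apply Rmult_le_pos; [ assert (0 <= A n * b n) by (specialize (HA0 n); nra); nra | left; apply Rinv_0_lt_compat; lra]).
  set (P1 := fun j => 2 * C / b N0 * Tsum f j).
  set (Phi := fun j => if (j <=? N0)%nat then P1 j else if (j <=? n)%nat then P1 N0 + K * (b j - b N0) / b n
                        else P1 N0 + K * (b n - b N0) / b n + K * b n * (/ b n - / b (pred j))).
  set (tau := fun j => if (j =? n)%nat then 0 else b n * (A j * (Rabs (E (lam j)) + Rabs (Od (lam j))))).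
  assert (Hlo : forall j, (j < n)%nat -> q * b j <= b n).
  { intros j Hj. assert (H1 := Hq (pred n) ltac:(lia)). replace (S (pred n)) with n in H1 by lia.
    assert (b j <= b (pred n)) by (apply b_mono; auto; lia). assert (q * b j <= q * b (pred n)) by (apply Rmult_le_compat_l; lra). lra. }
  assert (Hhi : forall j, (n < j)%nat -> q * b (pred j) <= b j).
  { intros j Hj. assert (H1 := Hq (pred j) ltac:(lia)). replace (S (pred j)) with j in H1 by lia. auto. }
  assert (Htlow : forall j, (j < n)%nat -> tau j <= 2 * C * A j * (b j * b j) / b n).
  { intros j Hj. unfold tau. destruct (Nat.eqb_spec j n); [lia|].
    assert (Hl0 : 0 <= lam j) by (unfold lam; apply Rmult_le_pos; [left; auto | left; apply Rinv_0_lt_compat; auto]).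
    assert (Hl1 : 1 - / q <= 1 - lam j).
    { unfold lam. assert (b j / b n <= / q); [|lra].
      apply Rmult_le_reg_r with (q * b n). nra.
      replace (b j / b n * (q * b n)) with (q * b j) by (field; lra).
      replace (/ q * (q * b n)) with (b n) by (field; lra). auto. }
    destruct (Hlow (lam j) Hl0 Hl1) as [h1 h2].
    assert (b n * (A j * (Rabs (E (lam j)) + Rabs (Od (lam j)))) <= b n * (A j * (2 * C * (lam j * lam j)))).
    { apply Rmult_le_compat_l; [lra|]. apply Rmult_le_compat_l; [auto|lra]. }
    eapply Rle_trans; [apply H|]. right. unfold lam. field. lra. }
  assert (Hthigh : forall j, (n < j)%nat -> tau j <= 2 * C * A j * (b n * b n) / b j).
  { intros j Hj. unfold tau. destruct (Nat.eqb_spec j n); [lia|].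
    assert (Hqb : q * b n <= b j) by (apply (b_lac b Hinc q Nq Hq); lia).
    assert (Hbj : 0 < b j) by auto.
    assert (Hl0 : 0 < lam j) by (unfold lam; apply Rdiv_lt_0_compat; auto).
    assert (Hl1 : (1 - / q) * lam j <= lam j - 1).
    { unfold lam. assert (1 <= / q * (b j / b n)); [|lra].
      apply Rmult_le_reg_r with (q * b n). nra.
      replace (/ q * (b j / b n) * (q * b n)) with (b j) by (field; lra). lra. }
    destruct (Hhigh (lam j) Hl0 Hl1) as [h1 h2].
    assert (b n * (A j * (Rabs (E (lam j)) + Rabs (Od (lam j)))) <= b n * (A j * (2 * (C / lam j)))).
    { apply Rmult_le_compat_l; [lra|]. apply Rmult_le_compat_l; [auto|lra]. }
    eapply Rle_trans; [apply H|]. right. unfold lam. field. lra. }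
  assert (Htel : forall N, (n <= N)%nat -> sum_f_R0 tau N <= Phi (S N) - Phi O).
  { intros N HN. apply telescope. intros j Hj.
    destruct (Nat.lt_total j n) as [Hjn|[Hjn|Hjn]].
    -
      destruct (Nat.le_gt_cases (S j) N0) as [HjN0|HjN0].
      +
        unfold Phi. replace (S j <=? N0)%nat with true by (symmetry; apply Nat.leb_le; lia).
        replace (j <=? N0)%nat with true by (symmetry; apply Nat.leb_le; lia).
        unfold P1. simpl Tsum.
        eapply Rle_trans; [apply Htlow; auto|].
        replace (2 * C / b N0 * (Tsum f j + f j) - 2 * C / b N0 * Tsum f j) with (2 * C * f j / b N0) by (field; lra).
        unfold f. assert (0 <= 2 * C * A j * (b j * b j)) by (specialize (HA0 j); assert (0 < b j) by auto; apply Rmult_le_pos; nra).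
        replace (2 * C * (A j * b j * b j)) with (2 * C * A j * (b j * b j)) by ring.
        unfold Rdiv. apply Rmult_le_compat_l; auto. apply Rinv_le_contravar; auto.
      +
        unfold Phi. replace (S j <=? N0)%nat with false by (symmetry; apply Nat.leb_gt; lia).
        replace (S j <=? n)%nat with true by (symmetry; apply Nat.leb_le; lia).
        eapply Rle_trans; [apply Htlow; auto|].
        destruct (Nat.leb_spec j N0) as [h|h].
        * assert (j = N0) by lia. subst j.
          replace (P1 N0 + K * (b (S N0) - b N0) / b n - P1 N0) with (K * (b (S N0) - b N0) / b n) by ring.
          apply low_step; [lra | auto | apply Hmax; lia | auto | apply b_mono; auto; lia | lra | specialize (Hq N0 ltac:(lia)); lra].
        * replace (j <=? n)%nat with true by (symmetry; apply Nat.leb_le; lia).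
          replace (P1 N0 + K * (b (S j) - b N0) / b n - (P1 N0 + K * (b j - b N0) / b n)) with (K * (b (S j) - b j) / b n) by (field; lra).
          apply low_step; [lra | auto | apply Hmax; lia | auto | apply b_mono; auto; lia | lra | specialize (Hq j ltac:(lia)); lra].
    -
      subst j. unfold tau. rewrite Nat.eqb_refl.
      unfold Phi. replace (S n <=? N0)%nat with false by (symmetry; apply Nat.leb_gt; lia).
      replace (S n <=? n)%nat with false by (symmetry; apply Nat.leb_gt; lia).
      simpl pred.
      destruct (Nat.leb_spec n N0) as [h|h].
      + assert (n = N0) by lia. subst n. right. field. lra.
      + replace (n <=? n)%nat with true by (symmetry; apply Nat.leb_le; lia). right. field. lra.
    -
      eapply Rle_trans; [apply Hthigh; auto|].
      unfold Phi. replace (S j <=? N0)%nat with false by (symmetry; apply Nat.leb_gt; lia).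
      replace (S j <=? n)%nat with false by (symmetry; apply Nat.leb_gt; lia).
      replace (j <=? N0)%nat with false by (symmetry; apply Nat.leb_gt; lia).
      replace (j <=? n)%nat with false by (symmetry; apply Nat.leb_gt; lia).
      simpl pred.
      replace (P1 N0 + K * (b n - b N0) / b n + K * b n * (/ b n - / b j) -
        (P1 N0 + K * (b n - b N0) / b n + K * b n * (/ b n - / b (pred j)))) with (K * b n * (/ b (pred j) - / b j)) by ring.
      apply high_step; [lra | auto | apply Hmax; lia | auto | auto | lra | apply Hhi; lia]. }
  assert (HPhi : forall N, (n <= N)%nat -> Phi (S N) - Phi O <= 2 * C * T / b N0 + 2 * K).
  { intros N HN. unfold Phi.
    replace (S N <=? N0)%nat with false by (symmetry; apply Nat.leb_gt; lia).
    replace (S N <=? n)%nat with false by (symmetry; apply Nat.leb_gt; lia).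
    replace (0 <=? N0)%nat with true by (symmetry; apply Nat.leb_le; lia).
    simpl pred. unfold P1. simpl Tsum. fold T.
    assert (HbN : b n <= b N) by (apply b_mono; auto).
    assert (0 < b N) by auto.
    assert (K * (b n - b N0) / b n <= K).
    { unfold Rdiv. rewrite Rmult_assoc. rewrite <- (Rmult_1_r K) at 2. apply Rmult_le_compat_l; auto.
      apply Rmult_le_reg_r with (b n); auto. rewrite Rmult_assoc, Rinv_l by lra. lra. }
    assert (K * b n * (/ b n - / b N) <= K).
    { replace (K * b n * (/ b n - / b N)) with (K * (1 - b n / b N)) by (field; lra).
      rewrite <- (Rmult_1_r K) at 2. apply Rmult_le_compat_l; auto.
      assert (0 <= b n / b N) by (apply Rmult_le_pos; [lra | left; apply Rinv_0_lt_compat; auto]). lra. }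
    replace (2 * C / b N0 * T) with (2 * C * T / b N0) by (field; lra). lra. }
  assert (Hsum : forall N, (n <= N)%nat -> kap * (A n * b n) <= 2 * b n * (B + Rn N) + sum_f_R0 tau N).
  { intros N HN. destruct (Hint N HN) as [Ix Iy].
    rewrite (sum_split _ n N HN) in Ix. rewrite (sum_split _ n N HN) in Iy.
    replace (b n / b n) with 1 in Ix, Iy by (field; lra).
    set (ux := fun j => if (j =? n)%nat then 0 else x j * E (b j / b n)) in Ix.
    set (uy := fun j => if (j =? n)%nat then 0 else y j * Od (b j / b n)) in Iy.
    assert (Sx := sum_abs_le ux N). assert (Sy := sum_abs_le uy N).
    assert (Jx : Rabs (x n * E 1) <= B + Rn N + sum_f_R0 (fun j => Rabs (ux j)) N).
    { assert (Rabs (x n * E 1) <= Rabs (x n * E 1 + sum_f_R0 ux N) + Rabs (sum_f_R0 ux N)).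
      { replace (x n * E 1) with ((x n * E 1 + sum_f_R0 ux N) - sum_f_R0 ux N) at 1 by ring.
        unfold Rminus. rewrite <- (Rabs_Ropp (sum_f_R0 ux N)). apply Rabs_triang. }
      lra. }
    assert (Jy : Rabs (y n * Od 1) <= B + Rn N + sum_f_R0 (fun j => Rabs (uy j)) N).
    { assert (Rabs (y n * Od 1) <= Rabs (y n * Od 1 + sum_f_R0 uy N) + Rabs (sum_f_R0 uy N)).
      { replace (y n * Od 1) with ((y n * Od 1 + sum_f_R0 uy N) - sum_f_R0 uy N) at 1 by ring.
        unfold Rminus. rewrite <- (Rabs_Ropp (sum_f_R0 uy N)). apply Rabs_triang. }
      lra. }
    rewrite Rabs_mult in Jx, Jy.
    destruct (Hxy n) as (hx & hy & hA).
    destruct HE1 as [hE hO].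
    assert (kap * A n <= Rabs (x n) * Rabs (E 1) + Rabs (y n) * Rabs (Od 1)).
    { assert (kap * A n <= kap * Rabs (x n) + kap * Rabs (y n)) by nra.
      assert (kap * Rabs (x n) <= Rabs (x n) * Rabs (E 1)) by (rewrite Rmult_comm; apply Rmult_le_compat_l; auto using Rabs_pos).
      assert (kap * Rabs (y n) <= Rabs (y n) * Rabs (Od 1)) by (rewrite Rmult_comm; apply Rmult_le_compat_l; auto using Rabs_pos).
      lra. }
    assert (Hw : b n * (sum_f_R0 (fun j => Rabs (ux j)) N + sum_f_R0 (fun j => Rabs (uy j)) N) <= sum_f_R0 tau N).
    { rewrite <- plus_sum, scal_sum. apply sum_Rle. intros j _.
      unfold ux, uy, tau. destruct (j =? n)%nat.
      - rewrite Rabs_R0. lra.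
      - destruct (Hxy j) as (hx' & hy' & _). rewrite !Rabs_mult. unfold lam.
        assert (Rabs (x j) * Rabs (E (b j / b n)) <= A j * Rabs (E (b j / b n))) by (apply Rmult_le_compat_r; auto using Rabs_pos).
        assert (Rabs (y j) * Rabs (Od (b j / b n)) <= A j * Rabs (Od (b j / b n))) by (apply Rmult_le_compat_r; auto using Rabs_pos).
        rewrite Rmult_comm. apply Rmult_le_compat_l; lra. }
    assert (kap * A n * b n <= (2 * (B + Rn N) + (sum_f_R0 (fun j => Rabs (ux j)) N + sum_f_R0 (fun j => Rabs (uy j)) N)) * b n)
      by (apply Rmult_le_compat_r; lra).
    lra. }
  assert (HK2 : 2 * K <= kap / 2 * (A n * b n)).
  { unfold K. assert (0 <= A n * b n) by (specialize (HA0 n); nra).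
    replace (2 * (2 * C * (A n * b n) / (q - 1))) with (4 * C / (q - 1) * (A n * b n)) by (field; lra).
    apply Rmult_le_compat_r; auto. }
  assert (Hfin : forall N, (n <= N)%nat -> kap / 2 * (A n * b n) <= 2 * b n * B + 2 * C * T / b N0 + 2 * b n * Rn N).
  { intros N HN. assert (H1 := Hsum N HN). assert (H2 := Htel N HN). assert (H3 := HPhi N HN). lra. }
  destruct (Rle_or_lt (kap / 2 * (A n * b n)) (2 * b n * B + 2 * C * T / b N0)) as [h|h]; [exact h|].
  exfalso.
  set (gap := kap / 2 * (A n * b n) - (2 * b n * B + 2 * C * T / b N0)).
  destruct (HR (gap / (2 * b n + 1))) as [N1 HN1].
  { apply Rdiv_lt_0_compat; unfold gap; lra. }
  specialize (HN1 (N1 + n)%nat ltac:(lia)). unfold R_dist in HN1. rewrite Rminus_0_r in HN1.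
  specialize (Hfin (N1 + n)%nat ltac:(lia)).
  assert (Rn (N1 + n)%nat < gap / (2 * b n + 1)) by (apply Rle_lt_trans with (2 := HN1); apply Rle_abs).
  assert (2 * b n * Rn (N1 + n)%nat < gap).
  { assert (2 * b n * Rn (N1 + n)%nat <= (2 * b n + 1) * Rabs (Rn (N1 + n)%nat)).
    { assert (0 <= Rabs (Rn (N1 + n)%nat)) by apply Rabs_pos. assert (Rn (N1 + n)%nat <= Rabs (Rn (N1 + n)%nat)) by apply Rle_abs. nra. }
    assert ((2 * b n + 1) * Rabs (Rn (N1 + n)%nat) < gap).
    { apply Rmult_lt_reg_r with (/ (2 * b n + 1)). apply Rinv_0_lt_compat; lra.
      replace ((2 * b n + 1) * Rabs (Rn (N1 + n)%nat) * / (2 * b n + 1)) with (Rabs (Rn (N1 + n)%nat)) by (field; lra).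
      exact HN1. }
    lra. }
  unfold gap in *. lra.
Qed.

Lemma rdiv_nonneg a b : 0 <= a -> 0 < b -> 0 <= a / b.
Proof. intros. apply Rmult_le_pos; auto. left; apply Rinv_0_lt_compat; auto. Qed.

Lemma gronwall (c b : nat -> R) (q rho alpha : R) (Nq N1 : nat)
  (Hc0 : forall j, 0 <= c j) (Hb : forall j, 0 < b j)
  (Hq1 : 1 < q) (Hq : forall j, (Nq <= j)%nat -> q * b j <= b (S j))
  (Hrho : 0 <= rho <= (q - 1) / 2) (Ha : 0 < alpha)
  (Hrec : forall N, (N1 <= N)%nat -> c N <= alpha + rho * (Tsum (fun i => c i * b i) N / b N)) :
  exists N2, forall N, (N2 <= N)%nat -> c N <= 3 * alpha.
Proof.
  set (u := fun N => Tsum (fun i => c i * b i) N / b N).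
  set (th := (1 + rho) / q).
  set (us := alpha / (q - 1 - rho)).
  assert (Hqr : (q - 1) / 2 <= q - 1 - rho) by lra.
  assert (Hus : 0 < us) by (unfold us; apply Rdiv_lt_0_compat; lra).
  assert (Hus2 : us <= 2 * alpha / (q - 1)).
  { unfold us. apply Rmult_le_reg_r with ((q - 1 - rho) * (q - 1)). nra.
    replace (alpha / (q - 1 - rho) * ((q - 1 - rho) * (q - 1))) with (alpha * (q - 1)) by (field; lra).
    replace (2 * alpha / (q - 1) * ((q - 1 - rho) * (q - 1))) with (2 * alpha * (q - 1 - rho)) by (field; lra). nra. }
  assert (Hth : 0 <= th < 1).
  { unfold th. split. apply rdiv_nonneg; lra.
    apply Rmult_lt_reg_r with q. lra. unfold Rdiv. rewrite Rmult_assoc, Rinv_l by lra. lra. }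
  set (N0 := max N1 Nq).
  assert (Hstep : forall N, (N0 <= N)%nat -> u (S N) - us <= th * (u N - us)).
  { intros N HN. unfold u. simpl Tsum.
    assert (HcN := Hrec N ltac:(unfold N0 in HN; lia)).
    assert (HqN := Hq N ltac:(unfold N0 in HN; lia)).
    assert (HbN := Hb N). assert (HbS := Hb (S N)).
    set (TN := Tsum (fun i => c i * b i) N) in *.
    assert (HT0 : 0 <= TN) by (apply Tsum_nonneg; intro i; specialize (Hc0 i); specialize (Hb i); nra).
    assert (HuN : u N = TN / b N) by reflexivity.
    rewrite <- HuN in HcN.
    assert (0 <= u N) by (rewrite HuN; apply rdiv_nonneg; lra).
    assert (E1 : TN + c N * b N <= ((1 + rho) * u N + alpha) * b N).
    { rewrite HuN. replace (((1 + rho) * (TN / b N) + alpha) * b N) with (TN + (alpha + rho * (TN / b N)) * b N) by (field; lra).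
      rewrite <- HuN. assert (c N * b N <= (alpha + rho * u N) * b N) by (apply Rmult_le_compat_r; lra). lra. }
    assert (E2 : (TN + c N * b N) / b (S N) <= ((1 + rho) * u N + alpha) / q).
    { apply Rle_trans with (((1 + rho) * u N + alpha) * b N / b (S N)).
      unfold Rdiv. apply Rmult_le_compat_r. left; apply Rinv_0_lt_compat; lra. auto.
      apply Rmult_le_reg_r with (q * b (S N)). nra.
      replace (((1 + rho) * u N + alpha) * b N / b (S N) * (q * b (S N))) with (((1 + rho) * u N + alpha) * (q * b N)) by (field; lra).
      replace (((1 + rho) * u N + alpha) / q * (q * b (S N))) with (((1 + rho) * u N + alpha) * b (S N)) by (field; lra).
      apply Rmult_le_compat_l; nra. }
    assert (E3 : ((1 + rho) * u N + alpha) / q - us = th * (u N - us)).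
    { unfold th, us. field. lra. }
    rewrite <- HuN. lra. }
  assert (Hiter : forall k, u (N0 + k)%nat - us <= th ^ k * Rabs (u N0 - us)).
  { induction k.
    - rewrite Nat.add_0_r. simpl. rewrite Rmult_1_l. apply Rle_abs.
    - rewrite Nat.add_succ_r. eapply Rle_trans. apply Hstep. lia.
      simpl. rewrite Rmult_assoc. apply Rmult_le_compat_l; lra. }
  set (M := Rabs (u N0 - us)).
  destruct (pow_lt_1_zero th ltac:(rewrite Rabs_right; lra) (us / (M + 1))) as [k0 Hk0].
  { apply Rdiv_lt_0_compat; auto. unfold M. assert (0 <= Rabs (u N0 - us)) by apply Rabs_pos. lra. }
  exists (N0 + k0)%nat. intros N HN.
  replace N with (N0 + (N - N0))%nat by lia.
  assert (Hk := Hiter (N - N0)%nat).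
  specialize (Hk0 (N - N0)%nat ltac:(lia)).
  rewrite Rabs_right in Hk0 by (apply Rle_ge; apply pow_le; lra).
  assert (HM : 0 <= M) by apply Rabs_pos.
  assert (th ^ (N - N0) * M < us).
  { assert (th ^ (N - N0) * (M + 1) < us).
    { apply Rmult_lt_reg_r with (/ (M + 1)). apply Rinv_0_lt_compat; lra.
      replace (th ^ (N - N0) * (M + 1) * / (M + 1)) with (th ^ (N - N0)) by (field; lra). exact Hk0. }
    assert (0 <= th ^ (N - N0)) by (apply pow_le; lra). nra. }
  assert (Hu : u (N0 + (N - N0))%nat <= 2 * us) by (fold M in Hk; lra).
  assert (HR := Hrec (N0 + (N - N0))%nat ltac:(unfold N0; lia)). fold (u (N0 + (N - N0))%nat) in HR.
  assert (rho * u (N0 + (N - N0))%nat <= rho * (2 * us)).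
  { apply Rmult_le_compat_l; lra. }
  assert (rho * (2 * us) <= 2 * alpha).
  { apply Rle_trans with ((q - 1) / 2 * (2 * (2 * alpha / (q - 1)))).
    apply Rmult_le_compat; lra. right. field. lra. }
  lra.
Qed.


Lemma finite_argmax (A : nat -> R) N0 L : exists n, (N0 <= n)%nat /\ (n <= max N0 L)%nat /\
  forall j, (N0 <= j)%nat -> (j <= L)%nat -> A j <= A n.
Proof.
  induction L.
  - exists N0. split; [lia | split; [lia |]]. intros j H1 H2. assert (j = N0) by lia. subst. lra.
  - destruct IHL as [n (H1 & H2 & H3)].
    destruct (Rle_or_lt (A (S L)) (A n)) as [h|h].
    + exists n. split; [lia | split; [lia |]]. intros j Hj1 Hj2. destruct (Nat.eq_dec j (S L)). subst; auto. apply H3; lia.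
    + destruct (Nat.le_gt_cases N0 (S L)) as [hl|hl].
      * exists (S L). split; [lia | split; [lia |]]. intros j Hj1 Hj2. destruct (Nat.eq_dec j (S L)). subst; lra.
        assert (A j <= A n) by (apply H3; lia). lra.
      * exists n. split; [lia | split; [lia |]]. intros j Hj1 Hj2. lia.
Qed.

Lemma argmax_tail (A : nat -> R) (HA0 : forall j, 0 <= A j) (HA : Un_cv A 0) N0 :
  exists n, (N0 <= n)%nat /\ forall j, (N0 <= j)%nat -> A j <= A n.
Proof.
  destruct (classic (exists j0, (N0 <= j0)%nat /\ 0 < A j0)) as [[j0 [Hj0 Hpos]]|Hno].
  - destruct (HA (A j0) Hpos) as [K HK].
    destruct (finite_argmax A N0 (max K j0)) as [n (H1 & H2 & H3)].
    exists n. split; auto. intros j Hj.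
    destruct (Nat.le_gt_cases j (max K j0)) as [h|h].
    + apply H3; auto.
    + specialize (HK j ltac:(lia)). unfold R_dist in HK. rewrite Rminus_0_r in HK.
      assert (A j0 <= A n) by (apply H3; lia).
      assert (A j <= Rabs (A j)) by apply Rle_abs. lra.
  - exists N0. split; auto. intros j Hj.
    assert (~ (0 < A j)) by (intro; apply Hno; exists j; auto).
    specialize (HA0 N0). lra.
Qed.

Lemma terms_cv0 (A : nat -> R) l (Hl : Un_cv (sum_f_R0 A) l) : Un_cv A 0.
Proof.
  intros eps Heps. destruct (Hl (eps / 2) ltac:(lra)) as [N HN].
  exists (S N). intros n Hn. unfold R_dist in *. rewrite Rminus_0_r.
  destruct n. lia.
  assert (E : A (S n) = sum_f_R0 A (S n) - sum_f_R0 A n) by (simpl; ring).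
  rewrite E.
  assert (H1 := HN (S n) ltac:(lia)). assert (H2 := HN n ltac:(lia)).
  replace (sum_f_R0 A (S n) - sum_f_R0 A n) with ((sum_f_R0 A (S n) - l) - (sum_f_R0 A n - l)) by ring.
  eapply Rle_lt_trans. apply Rabs_triang. rewrite Rabs_Ropp. lra.
Qed.

Lemma cmod_term ax ay b t j : cmod (term_re ax ay b t j) (term_im ax ay b t j) = cmod (ax j) (ay j).
Proof.
  unfold cmod, term_re, term_im. f_equal.
  assert (H := sin2_cos2 (b j * t)). unfold Rsqr in H.
  replace ((ax j * cos (b j * t) - ay j * sin (b j * t)) ^ 2 + (ax j * sin (b j * t) + ay j * cos (b j * t)) ^ 2)
    with ((ax j ^ 2 + ay j ^ 2) * (sin (b j * t) * sin (b j * t) + cos (b j * t) * cos (b j * t))) by ring.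
  rewrite H. ring.
Qed.

Lemma param_choice q (Hq : 1 < q) : exists M : nat,
  let m := INR M in let d := 1 - / q in
  2 <= m /\ 2 / m <= d /\ 4 * Ck m d / (q - 1) <= (SS m - 1) / 2.
Proof.
  set (d := 1 - / q).
  assert (Hiq : 0 < / q < 1) by (split; [apply Rinv_0_lt_compat; lra | rewrite <- Rinv_1; apply Rinv_lt_contravar; lra]).
  assert (Hd : 0 < d <= 1) by (unfold d; lra).
  assert (Hqd : d <= q - 1).
  { unfold d. assert (q * (/ q) = 1) by (field; lra). nra. }
  set (D4 := d * d * d * d).
  assert (HD4 : 0 < D4 <= d).
  { unfold D4. split. repeat apply Rmult_lt_0_compat; lra.
    assert (d * d <= d) by nra. assert (d * d * d <= d * d) by nra. assert (d * d * d * d <= d * d * d) by nra. lra. }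
  destruct (INR_archimed 1 (64 / D4 + 2) ltac:(lra)) as [M HM].
  rewrite Rmult_1_r in HM.
  exists M. cbv zeta. fold d. set (m := INR M).
  assert (H64 : 0 < 64 / D4) by (apply Rdiv_lt_0_compat; lra).
  assert (Hm : 2 <= m) by (unfold m; lra).
  assert (HmD : 64 <= m * D4).
  { assert (64 / D4 * D4 = 64) by (field; lra). assert (64 / D4 <= m) by (unfold m; lra). nra. }
  assert (Hmd : 64 <= m * d) by nra.
  assert (HPI := PI2_1).
  split; [auto | split].
  - apply Rmult_le_reg_r with m. lra. unfold Rdiv. rewrite Rmult_assoc, Rinv_l by lra. nra.
  - unfold Ck, SS.
    assert (Hk : m <= m * PI - 1) by nra.
    assert (Hdd : 0 < d * d * d) by (repeat apply Rmult_lt_0_compat; lra).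
    assert (Hmm : 0 < m * m) by nra.
    apply Rle_trans with (m / 2); [|lra].
    apply Rmult_le_reg_r with (3 * (m * m) * (d * d * d) * (q - 1)).
    { repeat apply Rmult_lt_0_compat; lra. }
    replace (4 * (8 / (3 * (m * m) * (d * d * d))) / (q - 1) * (3 * (m * m) * (d * d * d) * (q - 1))) with 32 by (field; repeat split; lra).
    assert (m * D4 <= m * (d * d * d) * (q - 1)).
    { assert (D4 <= d * d * d * (q - 1)) by (unfold D4; apply Rmult_le_compat_l; lra).
      rewrite Rmult_assoc. apply Rmult_le_compat_l; lra. }
    assert (1 <= m * m) by nra.
    assert (64 <= m * (d * d * d) * (q - 1)) by lra.
    assert (0 <= m * (d * d * d) * (q - 1)) by lra.
    replace (m / 2 * (3 * (m * m) * (d * d * d) * (q - 1))) with (3 / 2 * (m * m) * (m * (d * d * d) * (q - 1))) by field.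
    nra.
Qed.

Lemma core_main ax ay b g l
  (Hsum : Un_cv (fun n => sum_f_R0 (fun j => cmod (ax j) (ay j)) n) l)
  (Hinc : forall j, b j < b (S j)) (Hpos : forall j, 0 < b j) (Hinf : cv_infty b)
  (Hlacun : exists q, 1 < q /\ exists N, forall j, (N <= j)%nat -> q <= b (S j) / b j)
  (Hg : forall t, Un_cv (fun n => sum_f_R0 (term_re ax ay b t) n) (g t)) :
  exists a0, 0 < a0 /\ forall t0 D eps eta, 0 < eps -> 0 < eta ->
   (forall h, Rabs h < eta -> Rabs (g (t0 + h) - g t0 - D * h) <= eps * Rabs h) ->
   exists N2, forall N, (N2 <= N)%nat -> cmod (ax N) (ay N) * b N <= a0 * eps.
Proof.
  destruct Hlacun as [q [Hq1 [Nq HNq]]].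
  assert (Hq : forall j, (Nq <= j)%nat -> q * b j <= b (S j)).
  { intros j Hj. specialize (HNq j Hj). specialize (Hpos j).
    apply Rmult_le_reg_r with (/ b j). apply Rinv_0_lt_compat; lra.
    rewrite Rmult_assoc, Rinv_r by lra. lra. }
  destruct (param_choice q Hq1) as [M HM]. cbv zeta in HM.
  set (m := INR M) in *. set (d := 1 - / q) in *.
  destruct HM as (Hm2 & Hdm & Hrho).
  assert (Hs : sin (SS m) = 0) by (unfold SS, m; apply sin_nPI).
  assert (Hiq : 0 < / q < 1) by (split; [apply Rinv_0_lt_compat; lra | rewrite <- Rinv_1; apply Rinv_lt_contravar; lra]).
  assert (Hd : 0 < d <= 1) by (unfold d; lra).
  set (S := SS m). set (kap := S - 1). set (C := Ck m d).
  assert (HPI := PI2_1).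
  assert (HS4 : 4 <= S) by (unfold S, SS; nra).
  assert (Hkap : 0 < kap) by (unfold kap; lra).
  assert (HC : 0 <= C).
  { unfold C, Ck. apply rdiv_nonneg. lra. repeat apply Rmult_lt_0_compat; nra. }
  exists (3 * (32 * (S * S) / kap)). split.
  { apply Rmult_lt_0_compat. lra. apply Rdiv_lt_0_compat; nra. }
  intros t0 D eps eta Heps Heta Hdiff.
  set (x := term_re ax ay b t0). set (y := term_im ax ay b t0).
  set (A := fun j => cmod (ax j) (ay j)).
  set (r := fun N => l - sum_f_R0 A N).
  assert (HA0 : forall j, 0 <= A j) by (intro j; unfold A; apply cmod_sq).
  assert (Hxy : forall j, Rabs (x j) <= A j /\ Rabs (y j) <= A j /\ A j <= Rabs (x j) + Rabs (y j)).
  { intro j. unfold A. rewrite <- (cmod_term ax ay b t0 j). apply cmod_ge. }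
  assert (HAcv : Un_cv A 0) by (apply (terms_cv0 A l); exact Hsum).
  assert (Hr0 : Un_cv r 0).
  { intros e He. destruct (Hsum e He) as [N HN]. exists N. intros n Hn. specialize (HN n Hn).
    unfold R_dist in *. unfold r. rewrite Rminus_0_r. rewrite Rabs_minus_sym in HN.
    replace (l - sum_f_R0 A n) with (l - sum_f_R0 (fun j => cmod (ax j) (ay j)) n) by reflexivity. auto. }
  assert (Hr : forall N h, Rabs (g (t0 + h) - sum_f_R0 (term_re ax ay b (t0 + h)) N) <= r N).
  { intros N h. apply (tail_bound (term_re ax ay b (t0 + h)) A (g (t0 + h)) l).
    intro j; apply term_bound. exact Hsum. apply Hg. }
  destruct (Hinf (S / eta)) as [N1 HN1].
  set (Rn := fun N => 2 * S * (4 * (2 * r N))).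
  assert (HRn : Un_cv Rn 0).
  { intros e He. destruct (Hr0 (e / (16 * S))) as [N HN]. apply Rdiv_lt_0_compat; lra.
    exists N. intros n Hn. specialize (HN n Hn). unfold R_dist in *. rewrite Rminus_0_r in *.
    unfold Rn. replace (2 * S * (4 * (2 * r n))) with (16 * S * r n) by ring.
    rewrite Rabs_mult, (Rabs_right (16 * S)) by lra.
    apply Rmult_lt_reg_r with (/ (16 * S)). apply Rinv_0_lt_compat; lra.
    replace (16 * S * Rabs (r n) * / (16 * S)) with (Rabs (r n)) by (field; lra). exact HN. }
  set (c := fun i => A i * b i).
  assert (Hc0 : forall i, 0 <= c i) by (intro i; unfold c; specialize (HA0 i); specialize (Hpos i); nra).
  assert (Hrec : forall N0, (max (Nat.succ Nq) N1 <= N0)%nat ->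
     c N0 <= 32 * (S * S) * eps / kap + 4 * C / kap * (Tsum (fun i => c i * b i) N0 / b N0)).
  { intros N0 HN0.
    destruct (argmax_tail A HA0 HAcv N0) as [n [Hn Hmax]].
    assert (Hbn : S / eta < b n) by (apply HN1; lia).
    assert (Hbn0 : 0 < b n) by auto.
    assert (Hsb : S / b n < eta).
    { apply Rmult_lt_reg_r with (b n / eta). apply Rdiv_lt_0_compat; lra.
      replace (S / b n * (b n / eta)) with (S / eta) by (field; lra).
      replace (eta * (b n / eta)) with (b n) by (field; lra). auto. }
    set (B := 2 * S * (4 * (eps * (S / b n)))).
    assert (Hint : forall N, (n <= N)%nat ->
       Rabs (sum_f_R0 (fun j => x j * Ev m (b j / b n)) N) <= B + Rn N /\
       Rabs (sum_f_R0 (fun j => y j * Ov m (b j / b n)) N) <= B + Rn N).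
    { intros N _. split.
      - assert (I := int_ineq (Ge m) (Ev m) (fun _ => 0) S ltac:(lra) (fun s => proj1 (Ge_bound m s Hm2))
          (KGe_cos m) (KGe_sin m) (KGe_1 m Hm2 Hs) (KGe_x m) ax ay b g t0 D eps eta (b n) (r N) N
          ltac:(lra) Hbn0 Hsb Hdiff (fun h => Hr N h)).
        replace (B + Rn N) with (2 * S * (4 * (eps * (S / b n) + 2 * r N))) by (unfold B, Rn; ring).
        fold x y in I.
        replace (sum_f_R0 (fun j => x j * Ev m (b j / b n)) N) with
          (sum_f_R0 (fun j => x j * Ev m (b j / b n) - y j * (fun _ : R => 0) (b j / b n)) N); auto.
        apply sum_eq. intros; ring.
      - assert (I := int_ineq (Go m) (fun _ => 0) (Ov m) S ltac:(lra) (fun s => proj2 (Ge_bound m s Hm2))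
          (KGo_cos m) (KGo_sin m) (KGo_1 m) (KGo_x m Hm2 Hs) ax ay b g t0 D eps eta (b n) (r N) N
          ltac:(lra) Hbn0 Hsb Hdiff (fun h => Hr N h)).
        replace (B + Rn N) with (2 * S * (4 * (eps * (S / b n) + 2 * r N))) by (unfold B, Rn; ring).
        fold x y in I.
        assert (EQ : sum_f_R0 (fun j => y j * Ov m (b j / b n)) N =
          - sum_f_R0 (fun j => x j * (fun _ : R => 0) (b j / b n) - y j * Ov m (b j / b n)) N).
        { replace (- sum_f_R0 (fun j => x j * (fun _ : R => 0) (b j / b n) - y j * Ov m (b j / b n)) N)
            with (-1 * sum_f_R0 (fun j => x j * (fun _ : R => 0) (b j / b n) - y j * Ov m (b j / b n)) N) by ring.
          rewrite scal_sum. apply sum_eq. intros; ring. }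
        rewrite EQ, Rabs_Ropp. auto. }
    assert (Hlow : forall l0, 0 <= l0 -> 1 - / q <= 1 - l0 -> Rabs (Ev m l0) <= C * (l0 * l0) /\ Rabs (Ov m l0) <= C * (l0 * l0)).
    { intros l0 H1 H2. apply Ev_low; auto; lra. }
    assert (Hhigh : forall l0, 0 < l0 -> (1 - / q) * l0 <= l0 - 1 -> Rabs (Ev m l0) <= C / l0 /\ Rabs (Ov m l0) <= C / l0).
    { intros l0 H1 H2. apply Ev_high; auto; lra. }
    assert (HE1 : kap <= Rabs (Ev m 1) /\ kap <= Rabs (Ov m 1)) by (apply Ev_main; auto).
    assert (HNqN0 : (Nq < N0)%nat) by (apply (Nat.max_lub_l _ _ _ HN0)).
    assert (K := key_step x y A b (Ev m) (Ov m) q C kap B Rn Nq N0 n Hxy Hpos Hinc Hq1 Hq Hkap HE1 HC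
       Hlow Hhigh Hrho HNqN0 Hn Hmax Hint HRn).
    assert (HcN0 : c N0 <= A n * b n).
    { unfold c. assert (A N0 <= A n) by (apply Hmax; lia). assert (b N0 <= b n) by (apply b_mono; auto).
      specialize (HA0 N0). specialize (Hpos N0). apply Rmult_le_compat; lra. }
    assert (E : 2 * b n * B = 16 * (S * S) * eps) by (unfold B; field; lra).
    rewrite E in K.
    change (Tsum (fun i => c i * b i) N0) with (Tsum (fun i => A i * b i * b i) N0).
    set (T := Tsum (fun i => A i * b i * b i) N0) in *.
    assert (HbN0 : 0 < b N0) by auto.
    apply Rmult_le_reg_l with (kap / 2). lra.
    eapply Rle_trans. apply Rmult_le_compat_l. lra. exact HcN0.
    eapply Rle_trans. exact K. right. field. split; lra. }
  destruct (gronwall c b q (4 * C / kap) (32 * (S * S) * eps / kap) Nq (max (Nat.succ Nq) N1) Hc0 Hpos Hq1 Hq) as [N2 HN2].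
  { split. apply rdiv_nonneg; lra.
    apply Rmult_le_reg_r with (/ (q - 1) * kap). apply Rmult_lt_0_compat; [apply Rinv_0_lt_compat; lra | lra].
    replace (4 * C / kap * (/ (q - 1) * kap)) with (4 * C / (q - 1)) by (field; lra).
    replace ((q - 1) / 2 * (/ (q - 1) * kap)) with (kap / 2) by (field; lra). auto. }
  { apply Rdiv_lt_0_compat; [| lra]. apply Rmult_lt_0_compat; [| lra]. nra. }
  { intros N HN. specialize (Hrec N HN). lra. }
  exists N2. intros N HN. specialize (HN2 N HN). unfold c, A in HN2.
  replace (3 * (32 * (S * S) / kap) * eps) with (3 * (32 * (S * S) * eps / kap)) by (field; lra). auto.
Qed.


Lemma Un_cv_ext' (u v : nat -> R) l : (forall n, u n = v n) -> Un_cv u l -> Un_cv v l.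
Proof. intros H Hu e He. destruct (Hu e He) as [N HN]. exists N. intros n Hn. rewrite <- H. auto. Qed.

Lemma term_le_sum (c : nat -> R) (Hc : forall i, 0 <= c i) j N : (j <= N)%nat -> c j <= sum_f_R0 c N.
Proof.
  intros H. induction N.
  - assert (j = O) by lia. subst. simpl. lra.
  - destruct (Nat.eq_dec j (S N)) as [->|ne].
    + simpl. assert (0 <= sum_f_R0 c N) by (apply cond_pos_sum; auto). lra.
    + simpl. specialize (IHN ltac:(lia)). specialize (Hc (S N)). lra.
Qed.

Lemma nondiff_lip ax ay b g l
  (Hsum : Un_cv (fun n => sum_f_R0 (fun j => cmod (ax j) (ay j)) n) l)
  (Hinc : forall j, b j < b (S j)) (Hpos : forall j, 0 < b j) (Hinf : cv_infty b)
  (Hlacun : exists q, 1 < q /\ exists N, forall j, (N <= j)%nat -> q <= b (S j) / b j)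
  (Hg : forall t, Un_cv (fun n => sum_f_R0 (term_re ax ay b t) n) (g t))
  (Hnot0 : ~ Un_cv (fun j => cmod (ax j) (ay j) * b j) 0) :
  (forall t D, ~ derivable_pt_lim g t D) /\
  ((forall M, exists j, M < cmod (ax j) (ay j) * b j) -> forall t, ~ lipschitz_at g t).
Proof.
  destruct (core_main ax ay b g l Hsum Hinc Hpos Hinf Hlacun Hg) as [a0 [Ha0 Hcore]].
  assert (Hc0 : forall j, 0 <= cmod (ax j) (ay j) * b j).
  { intro j. destruct (cmod_sq (ax j) (ay j)). specialize (Hpos j). nra. }
  split.
  - intros t D HD. apply Hnot0. intros e He.
    set (eps := e / (2 * a0)).
    assert (Heps : 0 < eps) by (unfold eps; apply Rdiv_lt_0_compat; lra).
    destruct (HD eps Heps) as [dl Hdl].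
    assert (Hdiff : forall h, Rabs h < dl -> Rabs (g (t + h) - g t - D * h) <= eps * Rabs h).
    { intros h Hh. destruct (Req_dec h 0) as [->|hn].
      - rewrite Rplus_0_r. replace (g t - g t - D * 0) with 0 by ring. rewrite Rabs_R0. lra.
      - specialize (Hdl h hn Hh).
        replace (g (t + h) - g t - D * h) with (h * ((g (t + h) - g t) / h - D)) by (field; auto).
        rewrite Rabs_mult. rewrite Rmult_comm. apply Rmult_le_compat_r. apply Rabs_pos. lra. }
    destruct (Hcore t D eps dl Heps (cond_pos dl) Hdiff) as [N2 HN2].
    exists N2. intros n Hn. specialize (HN2 n Hn). unfold R_dist. rewrite Rminus_0_r.
    rewrite Rabs_right by (apply Rle_ge; auto).
    apply Rle_lt_trans with (1 := HN2). unfold eps.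
    replace (a0 * (e / (2 * a0))) with (e / 2) by (field; lra). lra.
  - intros Hsup t [L [eta [HL [Heta Hlip]]]].
    assert (Hdiff : forall h, Rabs h < eta -> Rabs (g (t + h) - g t - 0 * h) <= L * Rabs h).
    { intros h Hh. replace (g (t + h) - g t - 0 * h) with (g (t + h) - g t) by ring.
      specialize (Hlip (t + h)). replace (t + h - t) with h in Hlip by ring. auto. }
    destruct (Hcore t 0 L eta HL Heta Hdiff) as [N2 HN2].
    set (c := fun j => cmod (ax j) (ay j) * b j).
    destruct (Hsup (a0 * L + sum_f_R0 c N2)) as [j Hj].
    assert (0 <= sum_f_R0 c N2) by (apply cond_pos_sum; intro; apply Hc0).
    assert (0 < a0 * L) by nra.
    destruct (Nat.le_gt_cases N2 j) as [h|h].
    + specialize (HN2 j h). lra.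
    + assert (c j <= sum_f_R0 c N2) by (apply term_le_sum; [intro; apply Hc0 | lia]).
      unfold c in *. lra.
Qed.

Theorem theorem2p1 (ax ay b : nat -> R) (fre fim : R -> R)
  (* sum |a_j| < infinity *)
  (Hsum : exists l, Un_cv (fun n => sum_f_R0 (fun j => cmod (ax j) (ay j)) n) l)
  (* b strictly increasing, positive, b_j -> infinity *)
  (Hinc : forall j, b j < b (S j))
  (Hpos : forall j, 0 < b j)
  (Hinf : cv_infty b)
  (* liminf b_{j+1}/b_j > 1 *)
  (Hlacun : exists q, 1 < q /\ exists N, forall j, (N <= j)%nat -> q <= b (S j) / b j)
  (* a_j b_j does not tend to 0 *)
  (Hnot0 : ~ Un_cv (fun j => cmod (ax j) (ay j) * b j) 0)
  (* f = fre + i fim is the sum of the series sum_j a_j e^{i b_j t} *)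
  (Hfre : forall t, Un_cv (fun n => sum_f_R0 (term_re ax ay b t) n) (fre t))
  (Hfim : forall t, Un_cv (fun n => sum_f_R0 (term_im ax ay b t) n) (fim t)) :
  (* f, Re f, Im f bounded *)
  (exists M, forall t, cmod (fre t) (fim t) <= M) /\
  (exists M, forall t, Rabs (fre t) <= M) /\
  (exists M, forall t, Rabs (fim t) <= M) /\
  (* continuous *)
  continuity fre /\ continuity fim /\
  (* differentiable nowhere *)
  (forall t, ~ cdifferentiable_at fre fim t) /\
  (forall t l, ~ derivable_pt_lim fre t l) /\
  (forall t l, ~ derivable_pt_lim fim t l) /\
  (* if sup_j |a_j| b_j = infinity: nowhere Lipschitz *)
  ((forall M, exists j, M < cmod (ax j) (ay j) * b j) ->
     (forall t, ~ clipschitz_at fre fim t) /\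
     (forall t, ~ lipschitz_at fre t) /\
     (forall t, ~ lipschitz_at fim t)).
Proof.
  destruct Hsum as [l Hl].
  set (A := fun j => cmod (ax j) (ay j)).
  assert (Hl' : Un_cv (sum_f_R0 A) l) by exact Hl.
  assert (Hbre : forall t, Rabs (fre t) <= l).
  { intro t. apply (series_bound (term_re ax ay b t) A l (fre t)); auto. intro j; apply term_bound. }
  assert (Hbim : forall t, Rabs (fim t) <= l).
  { intro t. apply (series_bound (term_im ax ay b t) A l (fim t)); auto. intro j; apply term_bound. }
  (* imaginary part as a real part *)
  set (ax2 := ay). set (ay2 := fun k => - ax k).
  assert (Hl2 : Un_cv (fun n => sum_f_R0 (fun j => cmod (ax2 j) (ay2 j)) n) l).
  { apply (Un_cv_ext' (sum_f_R0 A)); auto. intro n. apply sum_eq. intros i _. unfold A, ax2, ay2. rewrite cmod_swap. auto. }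
  assert (Hfim2 : forall t, Un_cv (fun n => sum_f_R0 (term_re ax2 ay2 b t) n) (fim t)).
  { intro t. apply (Un_cv_ext' (fun n => sum_f_R0 (term_im ax ay b t) n)); auto. intro n. apply sum_eq. intros i _.
    unfold ax2, ay2. apply term_im_re. }
  assert (Hnot02 : ~ Un_cv (fun j => cmod (ax2 j) (ay2 j) * b j) 0).
  { intro H. apply Hnot0. apply (Un_cv_ext' (fun j => cmod (ax2 j) (ay2 j) * b j)); auto. intro n. unfold ax2, ay2. rewrite cmod_swap. auto. }
  destruct (nondiff_lip ax ay b fre l Hl Hinc Hpos Hinf Hlacun Hfre Hnot0) as [ND1 NL1].
  destruct (nondiff_lip ax2 ay2 b fim l Hl2 Hinc Hpos Hinf Hlacun Hfim2 Hnot02) as [ND2 NL2].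
  split; [|split; [|split; [|split; [|split; [|split; [|split; [|split]]]]]]].
  - exists (2 * l). intro t. destruct (cmod_ge (fre t) (fim t)) as (_ & _ & h).
    specialize (Hbre t). specialize (Hbim t). lra.
  - exists l. auto.
  - exists l. auto.
  - apply (series_cont (fun t j => term_re ax ay b t j) A l fre); auto.
    intros t j; apply term_bound. intros j t. apply term_re_cont.
  - apply (series_cont (fun t j => term_im ax ay b t j) A l fim); auto.
    intros t j; apply term_bound. intros j t. unfold term_im. reg.
  - intros t [lr [li [H1 H2]]]. exact (ND1 t lr H1).
  - exact ND1.
  - exact ND2.
  - intros Hsup. 
    assert (Hsup2 : forall M, exists j, M < cmod (ax2 j) (ay2 j) * b j).
    { intro M. destruct (Hsup M) as [j Hj]. exists j. unfold ax2, ay2. rewrite cmod_swap. auto. }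
    split; [|split].
    + intros t [L [eta [HL [Heta Hlip]]]]. apply (NL1 Hsup t). exists L, eta. split; auto. split; auto.
      intros t' Ht'. specialize (Hlip t' Ht'). destruct (cmod_ge (fre t' - fre t) (fim t' - fim t)) as (h & _). lra.
    + apply NL1; auto.
    + apply NL2; auto.
Qed.
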